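(* Let $d\ge2$, $L\in\mathbb{N}$, and let $f:[0,1)^d\to[0,\infty)$ be $L$-piecewise constant. There is a constant $C>0$ depending only on $d$ such that for every $\varepsilon>0$, every integer $k_1\ge L$, every integer $k_2\ge C\|f\|_{L^\infty((0,1)^d)}k_1^{d-1}/\varepsilon^d$, and every $\mathbf{b}\in\Phi(k_1,k_2)$, \[\sum_{j\in\mathcal{H}_{\mathbf b}}p_{\mathbf b,j}^{1/d}\le\bar J+\varepsilon.\]
   Context: $x\leqq y$ means $x_i\le y_i$ for all $i$, $x<y$ means $x_i<y_i$ for all $i$. Extend $f$ by $0$ outside $[0,1)^d$. For a multiindex $\alpha$ with integer entries $1\le\alpha_i\le L$, $Q_{L,\alpha}=\{x\in[0,1)^d:\alpha-(1,\dots,1)\leqq Lx<\alpha\}$; $f$ is $L$-piecewise constant if it is constant on each $Q_{L,\alpha}$. $\mathcal{A}$ is the set of $\gamma\in C^1([0,1];\mathbb{R}^d)$ with all components of $\gamma'(t)$ nonnegative and $\gamma'(t)\ne0$ for every $t$; $J(\gamma)=\int_0^1 f(\gamma(t))^{1/d}(\gamma_1'(t)\cdots\gamma_d'(t))^{1/d}dt$; $\bar J=\sup_{\gamma\in\mathcal{A}}J(\gamma)$. Given integers $k_1,k_2\ge1$, set $\Delta x=1/k_1$ and $\Delta y=\Delta x/k_2$. $\Phi(k_1,k_2)$ is the set of sequences $\mathbf b=(b_j)_{j=1}^{k_1}$ of multiindices $b_j$ with nonnegative integer entries in $\mathbb{N}^{d-1}$ such that $b_1\leqq\cdots\leqq b_{k_1}$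 and $\|b_j\|_\infty\le k_1k_2$. For $\mathbf b\in\Phi(k_1,k_2)$ set $z_{\mathbf b,0}=0\in\mathbb{R}^d$ and $z_{\mathbf b,j}=(b_j\Delta y,\,j\Delta x)\in\mathbb{R}^{d-1}\times\mathbb{R}$ for $j\ge1$; $R_{\mathbf b,j}=\{x\in[0,1)^d:z_{\mathbf b,j-1}-(1,\dots,1,0)\Delta y\leqq x<z_{\mathbf b,j}\}$ for $1\le j\le k_1$; $p_{\mathbf b,j}=\int_{R_{\mathbf b,j}}f(x)\,dx$; and $\mathcal{H}_{\mathbf b}=\{j: R_{\mathbf b,j}\subset Q_{L,\alpha}\text{ for some }\alpha\}$. *)

(* Defs.v *)
From Stdlib Require Import Reals Lra Lia.
From Stdlib Require Import ClassicalDescription.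
From Coquelicot Require Import Coquelicot.
Open Scope R_scope.

(* Points of R^d are represented as nat -> R; only coordinates 0..d-1
   (0-based; coordinate i corresponds to the paper's x_{i+1}) matter. *)
Definition vec := nat -> R.

Definition indic (P : Prop) : R :=
  if excluded_middle_informative P then 1 else 0.

Definition in_cube (d : nat) (x : vec) : Prop :=
  forall i, (i < d)%nat -> 0 <= x i < 1.

Definition in_open_cube (d : nat) (x : vec) : Prop :=
  forall i, (i < d)%nat -> 0 < x i < 1.

Definition multiindex (d L : nat) (alpha : nat -> nat) : Prop :=
  forall i, (i < d)%nat -> (1 <= alpha i <= L)%nat.

Definition Qcell (d L : nat) (alpha : nat -> nat) (x : vec) : Prop :=
  in_cube d x /\
  forall i, (i < d)%nat -> INR (alpha i) - 1 <= INR L * x i < INR (alpha i).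

Definition piecewise_const (d L : nat) (f : vec -> R) : Prop :=
  forall alpha, multiindex d L alpha ->
  forall x y, Qcell d L alpha x -> Qcell d L alpha y -> f x = f y.

(* || f ||_{L^infty((0,1)^d)}  (for L-piecewise constant f the
   supremum over the open cube coincides with the essential supremum) *)
Definition Linf_norm (d : nat) (f : vec -> R) : R :=
  real (Lub_Rbar (fun y => exists x, in_open_cube d x /\ y = Rabs (f x))).

Definition droot (d : nat) (x : R) : R :=
  if Rle_dec x 0 then 0 else Rpower x (/ INR d).

Fixpoint prodn (d : nat) (g : nat -> R) : R :=
  match d with
  | O => 1
  | S n => prodn n g * g n
  end.

Definition unit_I (t : R) : Prop := 0 <= t <= 1.

(* gamma in C^1([0,1];R^d) with derivative g: for each coordinate i < d and
   t in [0,1], g t i is the derivative of gamma_i at t relative to [0,1]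
   (one-sided at the endpoints), and g _ i is continuous on [0,1]. *)
Definition C1_with_deriv (d : nat) (gamma g : R -> vec) : Prop :=
  forall i, (i < d)%nat -> forall t, unit_I t ->
    filterlim (fun s => (gamma s i - gamma t i) / (s - t))
      (within (fun s => unit_I s /\ s <> t) (locally t)) (locally (g t i)) /\
    filterlim (fun s => g s i) (within unit_I (locally t)) (locally (g t i)).

Definition admissible (d : nat) (gamma g : R -> vec) : Prop :=
  C1_with_deriv d gamma g /\
  forall t, unit_I t ->
    (forall i, (i < d)%nat -> 0 <= g t i) /\ (exists i, (i < d)%nat /\ g t i <> 0).

Definition Jfun (d : nat) (f : vec -> R) (gamma g : R -> vec) : R :=
  RInt (fun t => droot d (f (gamma t)) * droot d (prodn d (g t))) 0 1.

Definition Jbar (d : nat) (f : vec -> R) : Rbar :=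
  Lub_Rbar (fun v => exists gamma g, admissible d gamma g /\ v = Jfun d f gamma g).

(* Phi(k1,k2): b j i for 1 <= j <= k1 and i < d-1 *)
Definition in_Phi (d k1 k2 : nat) (b : nat -> nat -> nat) : Prop :=
  (forall j i, (1 <= j)%nat -> (j < k1)%nat -> (i < d - 1)%nat -> (b j i <= b (S j) i)%nat) /\
  (forall j i, (1 <= j <= k1)%nat -> (i < d - 1)%nat -> (b j i <= k1 * k2)%nat).

Definition dx (k1 : nat) : R := / INR k1.
Definition dy (k1 k2 : nat) : R := dx k1 / INR k2.

Definition zpt (d k1 k2 : nat) (b : nat -> nat -> nat) (j : nat) : vec :=
  fun i => match j with
           | O => 0
           | S _ => if (i <? d - 1)%nat then INR (b j i) * dy k1 k2 else INR j * dx k1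
           end.

Definition Rbox (d k1 k2 : nat) (b : nat -> nat -> nat) (j : nat) (x : vec) : Prop :=
  in_cube d x /\
  forall i, (i < d)%nat ->
    zpt d k1 k2 b (j - 1) i - (if (i <? d - 1)%nat then dy k1 k2 else 0) <= x i
    /\ x i < zpt d k1 k2 b j i.

(* d-dimensional integral over [0,1]^d, written as an iterated Riemann integral
   over coordinates d-1, ..., 0 *)
Definition upd (x : vec) (n : nat) (s : R) : vec :=
  fun i => if Nat.eqb i n then s else x i.

Fixpoint iint (n : nat) (F : vec -> R) (x : vec) : R :=
  match n with
  | O => F x
  | S m => RInt (fun s => iint m F (upd x m s)) 0 1
  end.

Definition cube_integral (d : nat) (F : vec -> R) : R := iint d F (fun _ => 0).

Definition pbj (d k1 k2 : nat) (f : vec -> R) (b : nat -> nat -> nat) (j : nat) : R :=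
  cube_integral d (fun x => indic (Rbox d k1 k2 b j x) * f x).

Definition inH (d L k1 k2 : nat) (b : nat -> nat -> nat) (j : nat) : Prop :=
  exists alpha, multiindex d L alpha /\
    forall x, Rbox d k1 k2 b j x -> Qcell d L alpha x.

Definition Hsum (d L k1 k2 : nat) (f : vec -> R) (b : nat -> nat -> nat) : R :=
  sum_f 1 k1 (fun j => indic (inH d L k1 k2 b j) * droot d (pbj d k1 k2 f b j)).

(* Main.v *)
Require Import Defs.
From Stdlib Require Import Reals Lra Lia ZArith Classical FunctionalExtensionality ClassicalDescription.
From Coquelicot Require Import Coquelicot.
Open Scope R_scope.

Lemma pow_lt_strict (x y : R) (n : nat) : 0 <= x < y -> (1 <= n)%nat -> x ^ n < y ^ n.
Proof.
  intros [Hx Hxy] Hn. induction n as [|n IH]; [lia|].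
  destruct (Nat.eq_dec n 0) as [->|Hn0]; [simpl; lra|].
  simpl. assert (H := IH ltac:(lia)). assert (0 <= x ^ n) by (apply pow_le; lra).
  apply Rle_lt_trans with (x * y ^ n). apply Rmult_le_compat_l; lra.
  apply Rmult_lt_compat_r; lra.
Qed.

Lemma droot_nonneg d x : 0 <= droot d x.
Proof. unfold droot. destruct (Rle_dec x 0); [lra|]. unfold Rpower. left; apply exp_pos. Qed.

Lemma droot_pow d x : (1 <= d)%nat -> 0 <= x -> droot d x ^ d = x.
Proof.
  intros Hd Hx. unfold droot. destruct (Rle_dec x 0).
  - assert (x = 0) by lra. subst. apply pow_i. lia.
  - rewrite <- Rpower_pow. rewrite Rpower_mult. rewrite Rinv_l.
    + rewrite Rpower_1; lra.
    + apply not_0_INR; lia.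
    + unfold Rpower; apply exp_pos.
Qed.

Lemma droot_le_pow d x y : (1 <= d)%nat -> 0 <= y -> x <= y ^ d -> droot d x <= y.
Proof.
  intros Hd Hy H. destruct (Rle_dec x 0) as [Hx|Hx].
  - unfold droot. destruct (Rle_dec x 0); [lra|contradiction].
  - destruct (Rle_lt_dec (droot d x) y) as [|Hlt]; [auto|].
    exfalso. assert (y ^ d < droot d x ^ d) by (apply pow_lt_strict; auto).
    rewrite droot_pow in H0 by (auto; lra). lra.
Qed.

Lemma droot_ge_pow d x y : (1 <= d)%nat -> 0 <= y -> y ^ d <= x -> y <= droot d x.
Proof.
  intros Hd Hy H. assert (Hx : 0 <= x) by (apply Rle_trans with (y^d); auto; apply pow_le; auto).
  destruct (Rle_lt_dec y (droot d x)) as [|Hlt]; [auto|].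
  exfalso. assert (droot d x ^ d < y ^ d) by (apply pow_lt_strict; auto; split; auto; apply droot_nonneg).
  rewrite droot_pow in H0 by auto. lra.
Qed.

Lemma droot_of_pow d y : (1 <= d)%nat -> 0 <= y -> droot d (y ^ d) = y.
Proof. intros. apply Rle_antisym; [apply droot_le_pow|apply droot_ge_pow]; auto; lra. Qed.

Lemma droot_mono d x y : (1 <= d)%nat -> x <= y -> droot d x <= droot d y.
Proof.
  intros Hd H. destruct (Rle_dec x 0) as [Hx|Hx].
  - unfold droot at 1. destruct (Rle_dec x 0); [apply droot_nonneg|contradiction].
  - apply droot_le_pow; auto. apply droot_nonneg. rewrite droot_pow; auto; lra.
Qed.

Lemma droot_mult d x y : (1 <= d)%nat -> 0 <= x -> 0 <= y -> droot d (x * y) = droot d x * droot d y.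
Proof.
  intros Hd Hx Hy.
  assert (E : (droot d x * droot d y) ^ d = x * y).
  { rewrite Rpow_mult_distr, !droot_pow; auto. }
  rewrite <- E. apply droot_of_pow; auto.
  apply Rmult_le_pos; apply droot_nonneg.
Qed.

Lemma droot_0 d : droot d 0 = 0.
Proof. unfold droot. destruct (Rle_dec 0 0); lra. Qed.

Lemma droot_le0 d x : x <= 0 -> droot d x = 0.
Proof. unfold droot. destruct (Rle_dec x 0); lra. Qed.

Lemma pow_superadd (a b : R) (n : nat) : (1 <= n)%nat -> 0 <= a -> 0 <= b -> a ^ n + b ^ n <= (a + b) ^ n.
Proof.
  intros Hn Ha Hb. induction n as [|n IH]; [lia|].
  destruct (Nat.eq_dec n 0) as [->|Hn0]; [simpl; lra|].
  simpl. assert (H := IH ltac:(lia)). assert (0 <= a ^ n) by (apply pow_le; lra).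
  assert (0 <= b ^ n) by (apply pow_le; lra).
  apply Rle_trans with ((a+b) * (a^n + b^n)); [nra|].
  apply Rmult_le_compat_l; lra.
Qed.

Lemma droot_subadd d u v : (1 <= d)%nat -> 0 <= u -> 0 <= v -> droot d (u + v) <= droot d u + droot d v.
Proof.
  intros Hd Hu Hv. apply droot_le_pow; auto.
  - pose proof (droot_nonneg d u); pose proof (droot_nonneg d v); lra.
  - rewrite <- (droot_pow d u) at 1 by auto. rewrite <- (droot_pow d v) at 1 by auto.
    apply pow_superadd; auto; apply droot_nonneg.
Qed.

Lemma droot_cont d x : (1 <= d)%nat -> continuous (droot d) x.
Proof.
  intros Hd. apply continuity_pt_filterlim. apply continuity_pt_locally. intros eps.
  set (y0 := droot d x).
  assert (Hy0 : 0 <= y0) by apply droot_nonneg.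
  assert (He : 0 < eps) by apply cond_pos.
  set (xh := (y0 + eps/2) ^ d).
  assert (Hxh : x < xh).
  { destruct (Rle_dec x 0). apply Rle_lt_trans with 0; auto. unfold xh. apply pow_lt; lra.
    unfold xh. rewrite <- (droot_pow d x) by (auto; lra). apply pow_lt_strict; auto; split; [apply droot_nonneg| unfold y0 in *; lra]. }
  assert (Hdh : droot d xh = y0 + eps/2) by (apply droot_of_pow; auto; lra).
  destruct (Rlt_dec 0 (y0 - eps/2)) as [Hp|Hp].
  - set (xl := (y0 - eps/2) ^ d).
    assert (Hx0 : 0 < x). { destruct (Rle_dec x 0) as [r|r]; [|lra]. unfold y0 in Hp. rewrite droot_le0 in Hp; lra. }
    assert (Hxl : xl < x).
    { unfold xl. rewrite <- (droot_pow d x) by (auto; lra). apply pow_lt_strict; auto; split; [lra| unfold y0 in *; lra]. }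
    assert (Hdl : droot d xl = y0 - eps/2) by (apply droot_of_pow; auto; lra).
    assert (Hm : 0 < Rmin (x - xl) (xh - x)) by (apply Rmin_glb_lt; lra).
    exists (mkposreal _ Hm). intros u Hu. simpl in Hu. unfold ball in Hu; simpl in Hu; unfold AbsRing_ball in Hu; simpl in Hu.
    unfold abs, minus, plus, opp in Hu; simpl in Hu.
    apply Rabs_def2 in Hu. pose proof (Rmin_l (x-xl) (xh-x)); pose proof (Rmin_r (x-xl) (xh-x)).
    assert (droot d xl <= droot d u) by (apply droot_mono; auto; lra).
    assert (droot d u <= droot d xh) by (apply droot_mono; auto; lra).
    apply Rabs_def1; fold y0; lra.
  - assert (Hm : 0 < xh - x) by lra.
    exists (mkposreal _ Hm). intros u Hu. simpl in Hu. unfold ball in Hu; simpl in Hu; unfold AbsRing_ball in Hu; simpl in Hu.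
    unfold abs, minus, plus, opp in Hu; simpl in Hu.
    apply Rabs_def2 in Hu.
    assert (droot d u <= droot d xh) by (apply droot_mono; auto; lra).
    pose proof (droot_nonneg d u).
    apply Rabs_def1; fold y0; lra.
Qed.

Lemma lipschitz_cont (f : R -> R) K x : (forall u v, Rabs (f u - f v) <= K * Rabs (u - v)) -> continuous f x.
Proof.
  intros H. apply continuity_pt_filterlim. apply continuity_pt_locally. intros eps.
  assert (Hk : 0 < Rabs K + 1) by (pose proof (Rabs_pos K); lra).
  assert (Hd : 0 < eps / (Rabs K + 1)) by (apply Rdiv_lt_0_compat; [apply cond_pos|lra]).
  exists (mkposreal _ Hd). intros u Hu. unfold ball in Hu; simpl in Hu; unfold AbsRing_ball in Hu; simpl in Hu.
  unfold abs, minus, plus, opp in Hu; simpl in Hu.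
  apply Rle_lt_trans with (K * Rabs (u - x)); [apply H|].
  apply Rle_lt_trans with ((Rabs K + 1) * Rabs (u - x)).
  { pose proof (Rabs_pos (u-x)). pose proof (Rle_abs K). nra. }
  apply Rmult_lt_reg_l with (/ (Rabs K + 1)). apply Rinv_0_lt_compat; lra.
  rewrite <- Rmult_assoc, Rinv_l by lra. rewrite Rmult_1_l.
  unfold Rdiv in Hu. rewrite Rmult_comm. exact Hu.
Qed.

Fixpoint nsum (n : nat) (w : nat -> nat) : nat :=
  match n with O => O | S m => (nsum m w + w m)%nat end.

Lemma nsum_le n w w' : (forall j, (j < n)%nat -> (w' j <= w j)%nat) -> (nsum n w' <= nsum n w)%nat.
Proof. induction n; simpl; intros H; [lia|]. specialize (IHn (fun j Hj => H j ltac:(lia))). specialize (H n ltac:(lia)). lia. Qed.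

Lemma nsum_lt n w w' i : (i < n)%nat -> (forall j, (j < n)%nat -> (w' j <= w j)%nat) -> (w' i < w i)%nat ->
  (nsum n w' < nsum n w)%nat.
Proof.
  induction n; simpl; intros Hi H Hl; [lia|].
  destruct (Nat.eq_dec i n) as [->|Hne].
  - assert (nsum n w' <= nsum n w)%nat by (apply nsum_le; intros; apply H; lia). lia.
  - assert (nsum n w' < nsum n w)%nat by (apply IHn; auto; try lia; intros; apply H; lia).
    specialize (H n ltac:(lia)). lia.
Qed.

Lemma nsum_zero n w : (nsum n w = 0)%nat -> forall j, (j < n)%nat -> w j = 0%nat.
Proof. induction n; simpl; intros H j Hj; [lia|]. destruct (Nat.eq_dec j n); [subst; lia|]. apply IHn; lia. Qed.

Lemma ex_RInt_ext_ab (f g : R -> R) a b : a <= b -> (forall x, a < x < b -> f x = g x) -> ex_RInt f a b -> ex_RInt g a b.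
Proof. intros Hab H. apply ex_RInt_ext. intros x. rewrite Rmin_left, Rmax_right by lra. apply H. Qed.

Lemma int_step (d : nat) (Phi : (nat -> nat) -> R) (G : R -> R) :
  (forall k k', (forall i, (i < d)%nat -> k i = k' i) -> Phi k = Phi k') ->
  (forall t, continuous G t) ->
  forall N a b (k : nat -> R -> nat) (h : R -> R),
  a <= b ->
  (forall i s t, (i < d)%nat -> a <= s -> s <= t -> t <= b -> (k i s <= k i t)%nat) ->
  (nsum d (fun i => k i b - k i a) <= N)%nat ->
  (forall t, a <= t <= b -> h t = Phi (fun i => k i t) * G t) ->
  ex_RInt h a b.
Proof.
  intros HPhi HG N. induction N as [|N IH]; intros a b k h Hab Hmon HN Hh.
  -
    assert (Hc : forall t, a <= t <= b -> h t = Phi (fun i => k i a) * G t).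
    { intros t Ht. rewrite Hh by auto. f_equal. apply HPhi. intros i Hi.
      assert (E := nsum_zero d (fun i => (k i b - k i a)%nat) ltac:(lia) i Hi). simpl in E.
      assert (k i a <= k i t)%nat by (apply Hmon; (assumption || lra)). assert (k i t <= k i b)%nat by (apply Hmon; (assumption || lra)). lia. }
    apply ex_RInt_ext_ab with (fun t => Phi (fun i => k i a) * G t); auto.
    { intros; symmetry; apply Hc; lra. }
    apply (@ex_RInt_continuous R_CompleteNormedModule). intros z _. apply (continuous_mult (fun _ => Phi (fun i => k i a)) G).
    apply continuous_const. apply HG.
  - destruct (classic (exists i, (i < d)%nat /\ (k i a < k i b)%nat)) as [[i [Hi Hlt]]|Hno].
    2:{
      assert (Hc : forall t, a <= t <= b -> h t = Phi (fun i => k i a) * G t).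
      { intros t Ht. rewrite Hh by auto. f_equal. apply HPhi. intros j Hj.
        assert (k j a <= k j t)%nat by (apply Hmon; (assumption || lra)). assert (k j t <= k j b)%nat by (apply Hmon; (assumption || lra)).
        assert (~ (k j a < k j b)%nat) by (intro; apply Hno; eauto). lia. }
      apply ex_RInt_ext_ab with (fun t => Phi (fun i => k i a) * G t); auto.
      { intros; symmetry; apply Hc; lra. }
      apply (@ex_RInt_continuous R_CompleteNormedModule). intros z _. apply (continuous_mult (fun _ => Phi (fun i => k i a)) G).
      apply continuous_const. apply HG. }
    set (Sset := fun t => a <= t <= b /\ (k i t <= k i a)%nat).
    destruct (completeness Sset) as [s [Hub Hlub]].
    { exists b. intros t [Ht _]. lra. }
    { exists a. split; [lra|lia]. }
    assert (Has : a <= s) by (apply Hub; split; [lra|lia]).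
    assert (Hsb : s <= b) by (apply Hlub; intros t [Ht _]; lra).
    assert (Hleft : forall t, a <= t < s -> k i t = k i a).
    { intros t Ht. destruct (classic (exists t', Sset t' /\ t < t')) as [[t' [[Ht1 Ht2] Ht3]]|Hn].
      - assert (k i a <= k i t)%nat by (apply Hmon; (assumption || lra)). assert (k i t <= k i t')%nat by (apply Hmon; (assumption || lra)). lia.
      - exfalso. assert (s <= t). { apply Hlub. intros x Hx. destruct (Rle_dec x t); auto. exfalso; apply Hn; exists x; split; auto; lra. } lra. }
    assert (Hright : forall t, s < t <= b -> (k i a < k i t)%nat).
    { intros t Ht. destruct (Nat.lt_ge_cases (k i a) (k i t)) as [|Hge]; auto.
      exfalso. assert (t <= s) by (apply Hub; split; [lra|lia]). lra. }
    apply ex_RInt_Chasles with s.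
    + set (kL := fun j t => if Nat.eqb j i then k i a else k j t).
      apply ex_RInt_ext_ab with (fun t => Phi (fun j => kL j t) * G t); auto.
      { intros t Ht. rewrite Hh by lra. f_equal. apply HPhi. intros j Hj. unfold kL.
        destruct (Nat.eqb_spec j i); subst; auto. symmetry; apply Hleft; lra. }
      apply (IH a s kL); auto.
      * intros j u v Hj H1 H2 H3. unfold kL. destruct (Nat.eqb j i); auto. apply Hmon; (assumption || lra).
      * apply Nat.lt_succ_r. eapply Nat.lt_le_trans; [|exact HN].
        apply nsum_lt with i; auto.
        -- intros j Hj. unfold kL. destruct (Nat.eqb_spec j i); [lia|].
           assert (k j a <= k j s)%nat by (apply Hmon; (assumption || lra)). assert (k j s <= k j b)%nat by (apply Hmon; (assumption || lra)). lia.
        -- unfold kL. rewrite Nat.eqb_refl. lia.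
    + set (kR := fun j t => if Nat.eqb j i then Nat.max (k i t) (S (k i a)) else k j t).
      apply ex_RInt_ext_ab with (fun t => Phi (fun j => kR j t) * G t); auto.
      { intros t Ht. rewrite Hh by lra. f_equal. apply HPhi. intros j Hj. unfold kR.
        destruct (Nat.eqb_spec j i); subst; auto. assert (H' := Hright t ltac:(lra)). lia. }
      apply (IH s b kR); auto.
      * intros j u v Hj H1 H2 H3. unfold kR. destruct (Nat.eqb j i); auto.
        -- assert (k i u <= k i v)%nat by (apply Hmon; (assumption || lra)). lia.
        -- apply Hmon; (assumption || lra).
      * apply Nat.lt_succ_r. eapply Nat.lt_le_trans; [|exact HN].
        apply nsum_lt with i; auto.
        -- intros j Hj. unfold kR. destruct (Nat.eqb_spec j i).
           ++ subst. lia.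
           ++ assert (k j a <= k j s)%nat by (apply Hmon; (assumption || lra)). assert (k j s <= k j b)%nat by (apply Hmon; (assumption || lra)). lia.
        -- unfold kR. rewrite Nat.eqb_refl. lia.
Qed.

Lemma prodn_ext n w w' : (forall i, (i < n)%nat -> w i = w' i) -> prodn n w = prodn n w'.
Proof. induction n; simpl; intros H; auto. rewrite IHn by (intros; apply H; lia). rewrite H by lia. auto. Qed.

Lemma prodn_split n w m : (m < n)%nat -> prodn n w = w m * prodn n (fun i => if Nat.eqb i m then 1 else w i).
Proof.
  induction n; simpl; intros Hm; [lia|].
  destruct (Nat.eq_dec m n) as [->|Hne].
  - rewrite Nat.eqb_refl. rewrite (prodn_ext n w (fun i => if Nat.eqb i n then 1 else w i)).
    + ring.
    + intros i Hi. destruct (Nat.eqb_spec i n); auto; lia.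
  - rewrite IHn by lia. destruct (Nat.eqb_spec n m); [lia|]. ring.
Qed.

Lemma prodn_nonneg n w : (forall i, (i < n)%nat -> 0 <= w i) -> 0 <= prodn n w.
Proof. induction n; simpl; intros H; [lra|]. apply Rmult_le_pos; [apply IHn; intros; apply H; lia| apply H; lia]. Qed.

Lemma prodn_le n w w' : (forall i, (i < n)%nat -> 0 <= w i <= w' i) -> prodn n w <= prodn n w'.
Proof.
  induction n; simpl; intros H; [lra|].
  apply Rmult_le_compat; try apply prodn_nonneg; try (intros; apply H; lia); try apply H; try lia.
  apply IHn; intros; apply H; lia.
Qed.

Lemma iint_prod (d : nat) (c : R) (e : nat -> R -> R) :
  (forall i, (i < d)%nat -> ex_RInt (e i) 0 1) ->
  forall m, (m <= d)%nat -> forall y,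
  iint m (fun x => c * prodn d (fun i => e i (x i))) y =
  c * prodn d (fun i => if Nat.ltb i m then RInt (e i) 0 1 else e i (y i)).
Proof.
  intros He m. induction m as [|m IH]; intros Hm y.
  - simpl. f_equal. try (apply prodn_ext; intros i Hi; destruct (Nat.ltb_spec i 0); [lia|auto]).
  - simpl. set (K := c * prodn d (fun i => if Nat.eqb i m then 1 else if Nat.ltb i m then RInt (e i) 0 1 else e i (y i))).
    rewrite (RInt_ext _ (fun s => K * e m s)).
    + transitivity (K * RInt (e m) 0 1). { exact (@RInt_scal R_CompleteNormedModule (e m) 0 1 K (He m ltac:(lia))). } unfold K.
      rewrite (prodn_split d (fun i => if Nat.ltb i (S m) then RInt (e i) 0 1 else e i (y i)) m) by lia.
      destruct (Nat.ltb_spec m (S m)); [|lia].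
      rewrite (prodn_ext d (fun i => if Nat.eqb i m then 1 else if Nat.ltb i m then RInt (e i) 0 1 else e i (y i))
                (fun i => if Nat.eqb i m then 1 else if Nat.ltb i (S m) then RInt (e i) 0 1 else e i (y i))).
      { ring. }
      intros i Hi. destruct (Nat.eqb_spec i m); auto. destruct (Nat.ltb_spec i m); destruct (Nat.ltb_spec i (S m)); auto; lia.
    + intros s _. rewrite IH by lia. unfold K.
      rewrite (prodn_split d _ m) by lia. destruct (Nat.ltb_spec m m); [lia|].
      unfold upd at 1. rewrite Nat.eqb_refl.
      rewrite (Rmult_comm (e m s)). rewrite Rmult_assoc. f_equal. f_equal. apply prodn_ext. intros i Hi.
      destruct (Nat.eqb_spec i m); auto. unfold upd. destruct (Nat.eqb_spec i m); [lia|]. auto.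
Qed.

Lemma indic_true (P : Prop) : P -> indic P = 1.
Proof. unfold indic. destruct (excluded_middle_informative P); tauto. Qed.
Lemma indic_false (P : Prop) : ~ P -> indic P = 0.
Proof. unfold indic. destruct (excluded_middle_informative P); tauto. Qed.

Lemma indic_forall n (P : nat -> Prop) : indic (forall i, (i < n)%nat -> P i) = prodn n (fun i => indic (P i)).
Proof.
  induction n; simpl.
  - apply indic_true. intros; lia.
  - rewrite <- IHn. destruct (classic (P n)) as [Hp|Hp].
    + rewrite (indic_true (P n)) by auto. rewrite Rmult_1_r.
      destruct (classic (forall i, (i < n)%nat -> P i)) as [H|H].
      * rewrite !indic_true; auto. intros i Hi. destruct (Nat.eq_dec i n); [subst; auto|apply H; lia].
      * rewrite !indic_false; auto. intro H'; apply H; intros; apply H'; lia.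
    + rewrite (indic_false (P n)) by auto. rewrite Rmult_0_r. apply indic_false. intro H; apply Hp; apply H; lia.
Qed.

Lemma indic_int lo up : exists I, is_RInt (fun t => indic ((0 <= t < 1) /\ lo <= t < up)) 0 1 I /\ 0 <= I <= Rmax 0 (up - lo).
Proof.
  set (A := Rmin 1 (Rmax 0 lo)). set (B := Rmin 1 (Rmax A up)).
  assert (HA : 0 <= A <= 1) by (unfold A; split; [apply Rmin_glb; [lra|apply Rmax_l]|apply Rmin_l]).
  assert (HB : A <= B <= 1) by (unfold B; split; [apply Rmin_glb; [lra|apply Rmax_l]|apply Rmin_l]).
  exists (plus (plus (scal (A - 0) 0) (scal (B - A) 1)) (scal (1 - B) 0)).
  split.
  - apply (@is_RInt_Chasles R_NormedModule) with B. apply (@is_RInt_Chasles R_NormedModule) with A.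
    + apply (@is_RInt_ext R_NormedModule) with (fun _ => 0). 2: apply (@is_RInt_const R_NormedModule).
      rewrite Rmin_left, Rmax_right by lra. intros t Ht. symmetry. apply indic_false.
      intros [_ [H1 H2]]. unfold A in Ht.
      destruct (Rle_dec 1 (Rmax 0 lo)). rewrite Rmin_left in Ht by lra. 
      assert (lo <= t). auto. 
      destruct (Rle_dec 0 lo). rewrite Rmax_right in r by lra. lra. rewrite Rmax_left in r by lra. lra.
      rewrite Rmin_right in Ht by lra. destruct (Rle_dec 0 lo). rewrite Rmax_right in Ht by lra. lra. rewrite Rmax_left in Ht by lra. lra.
    + apply (@is_RInt_ext R_NormedModule) with (fun _ => 1). 2: apply (@is_RInt_const R_NormedModule).
      rewrite Rmin_left, Rmax_right by lra. intros t Ht. symmetry. apply indic_true.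
      assert (lo <= A \/ A = 1). { unfold A. destruct (Rle_dec 1 (Rmax 0 lo)). right; apply Rmin_left; lra. left. rewrite Rmin_right by lra. apply Rmax_r. }
      assert (t < up). { unfold B in Ht. destruct (Rle_dec 1 (Rmax A up)). rewrite Rmin_left in Ht by lra. destruct H; [|lra].
        destruct (Rle_dec A up). rewrite Rmax_right in r by lra. lra. rewrite Rmax_left in r by lra. lra.
        rewrite Rmin_right in Ht by lra. destruct (Rle_dec A up). rewrite Rmax_right in Ht by lra. lra. rewrite Rmax_left in Ht by lra. lra. }
      destruct H; lra.
    + apply (@is_RInt_ext R_NormedModule) with (fun _ => 0). 2: apply (@is_RInt_const R_NormedModule).
      rewrite Rmin_left, Rmax_right by lra. intros t Ht. symmetry. apply indic_false.
      intros [H1 [H2 H3]]. unfold B in Ht. destruct (Rle_dec 1 (Rmax A up)). rewrite Rmin_left in Ht by lra. lra.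
      rewrite Rmin_right in Ht by lra. assert (up <= Rmax A up) by apply Rmax_r. lra.
  - unfold plus, scal; simpl; unfold mult, plus; simpl. rewrite !Rmult_0_r, Rmult_1_r.
    split; [lra|]. apply Rle_trans with (Rmax 0 (B - A)). rewrite Rmax_right; lra.
    apply Rmax_lub; [apply Rmax_l|]. unfold B, A. destruct (Rle_dec 1 (Rmax 0 lo)).
    + rewrite (Rmin_left 1 (Rmax 0 lo)) by lra. rewrite Rmin_left. 2: apply Rmax_l. pose proof (Rmax_l 0 (up - lo)). lra.
    + rewrite (Rmin_right 1 (Rmax 0 lo)) by lra.
      assert (HH : Rmin 1 (Rmax (Rmax 0 lo) up) <= Rmax (Rmax 0 lo) up) by apply Rmin_r.
      assert (lo <= Rmax 0 lo) by apply Rmax_r. pose proof (Rmax_l 0 (up - lo)). pose proof (Rmax_r 0 (up - lo)).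
      assert (HM : Rmax (Rmax 0 lo) up = up \/ (Rmax (Rmax 0 lo) up = Rmax 0 lo /\ up <= Rmax 0 lo)).
      { destruct (Rle_dec (Rmax 0 lo) up). left; apply Rmax_right; lra. right; split; [apply Rmax_left|]; lra. }
      destruct HM as [HM|[HM HM']]; rewrite HM in HH |- *; lra.
Qed.

Definition phi (eta u : R) : R := / (1 - eta) * Rmax 0 (Rmin 1 (Rmin (u / eta) ((1 - u) / eta))).

Lemma Rmin_lip a b a' b' : Rabs (Rmin a b - Rmin a' b') <= Rabs (a - a') + Rabs (b - b').
Proof. unfold Rmin. destruct (Rle_dec a b), (Rle_dec a' b'); unfold Rabs; repeat destruct Rcase_abs; lra. Qed.
Lemma Rmax_lip a b a' b' : Rabs (Rmax a b - Rmax a' b') <= Rabs (a - a') + Rabs (b - b').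
Proof. unfold Rmax. destruct (Rle_dec a b), (Rle_dec a' b'); unfold Rabs; repeat destruct Rcase_abs; lra. Qed.

Lemma phi_lip eta u v : 0 < eta < 1/2 -> Rabs (phi eta u - phi eta v) <= (/ (1 - eta) * (2 / eta)) * Rabs (u - v).
Proof.
  intros He. unfold phi. rewrite <- Rmult_minus_distr_l. rewrite Rabs_mult.
  rewrite (Rabs_right (/ (1 - eta))) by (left; apply Rinv_0_lt_compat; lra).
  rewrite Rmult_assoc. apply Rmult_le_compat_l; [left; apply Rinv_0_lt_compat; lra|].
  eapply Rle_trans; [apply Rmax_lip|]. replace (Rabs (0 - 0)) with 0 by (rewrite Rminus_0_r, Rabs_R0; auto). rewrite Rplus_0_l.
  eapply Rle_trans; [apply Rmin_lip|]. replace (Rabs (1 - 1)) with 0 by (rewrite Rminus_eq_0, Rabs_R0; auto). rewrite Rplus_0_l.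
  eapply Rle_trans; [apply Rmin_lip|].
  replace (u / eta - v / eta) with ((u - v) / eta) by (field; lra).
  replace ((1 - u) / eta - (1 - v) / eta) with (- ((u - v) / eta)) by (field; lra).
  rewrite Rabs_Ropp. unfold Rdiv. rewrite Rabs_mult. rewrite (Rabs_right (/ eta)) by (left; apply Rinv_0_lt_compat; lra).
  lra.
Qed.

Lemma phi_cont eta u : 0 < eta < 1/2 -> continuous (phi eta) u.
Proof. intros He. apply lipschitz_cont with (/ (1 - eta) * (2 / eta)). intros; apply phi_lip; auto. Qed.

Lemma phi_nonneg eta u : 0 < eta < 1/2 -> 0 <= phi eta u.
Proof. intros. unfold phi. apply Rmult_le_pos. left; apply Rinv_0_lt_compat; lra. apply Rmax_l. Qed.

Lemma phi_out eta u : 0 < eta < 1/2 -> (u <= 0 \/ 1 <= u) -> phi eta u = 0.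
Proof.
  intros He Hu. unfold phi. rewrite Rmax_left. ring.
  assert (u / eta <= 0 \/ (1 - u) / eta <= 0).
  { destruct Hu; [left|right]; unfold Rdiv; apply Rmult_le_0_r; try lra; left; apply Rinv_0_lt_compat; lra. }
  pose proof (Rmin_r 1 (Rmin (u / eta) ((1 - u) / eta))). pose proof (Rmin_l (u / eta) ((1 - u) / eta)).
  pose proof (Rmin_r (u / eta) ((1 - u) / eta)). lra.
Qed.

Lemma phi_plateau eta u : 0 < eta < 1/2 -> eta <= u <= 1 - eta -> phi eta u = / (1 - eta).
Proof.
  intros He Hu. unfold phi. rewrite Rmin_left. rewrite Rmax_right by lra. ring.
  apply Rmin_glb; apply (Rmult_le_reg_r eta); try lra; unfold Rdiv; rewrite Rmult_assoc, Rinv_l; lra.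
Qed.

Lemma phi_le eta u : 0 < eta < 1/2 -> phi eta u <= / (1 - eta).
Proof.
  intros He. unfold phi. rewrite <- (Rmult_1_r (/ (1 - eta))) at 2. apply Rmult_le_compat_l.
  left; apply Rinv_0_lt_compat; lra. apply Rmax_lub. lra. apply Rmin_l.
Qed.

Lemma phi_int eta : 0 < eta < 1/2 -> is_RInt (phi eta) 0 1 1.
Proof.
  intros He. set (h := / (1 - eta)).
  assert (Hh : h * (1 - eta) = 1) by (unfold h; field; lra).
  enough (HH : is_RInt (phi eta) 0 1 (plus (plus (h * eta / 2) (h * (1 - 2 * eta))) (h * eta / 2))).
  { replace (plus (plus (h * eta / 2) (h * (1 - 2 * eta))) (h * eta / 2)) with 1 in HH; [exact HH| unfold plus; simpl; lra]. }
  apply (@is_RInt_Chasles R_NormedModule) with (1 - eta). apply (@is_RInt_Chasles R_NormedModule) with eta.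
  - apply (@is_RInt_ext R_NormedModule) with (fun u => h / eta * u).
    { rewrite Rmin_left, Rmax_right by lra. intros u Hu. unfold phi. fold h.
      assert (A1 : u / eta < 1) by (apply (Rmult_lt_reg_r eta); try lra; unfold Rdiv; rewrite !Rmult_assoc, Rinv_l; lra).
      assert (A2 : u / eta <= (1 - u) / eta) by (apply (Rmult_le_reg_r eta); try lra; unfold Rdiv; rewrite !Rmult_assoc, Rinv_l; lra).
      assert (A3 : 0 <= u / eta) by (apply Rmult_le_pos; [lra|left; apply Rinv_0_lt_compat; lra]).
      rewrite (Rmin_left (u / eta)) by lra. rewrite (Rmin_right 1) by lra. rewrite Rmax_right by lra.
      match goal with |- ?a = ?b => change (@eq R a b) end. field; lra. }
    replace (h * eta / 2) with (minus (h / eta * eta ^ 2 / 2) (h / eta * 0 ^ 2 / 2)) by (unfold minus, plus, opp; simpl; field; lra).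
    apply (is_RInt_derive (fun u => h / eta * u ^ 2 / 2)).
    + intros x _. auto_derive; auto. field; lra.
    + intros x _. apply (continuous_mult (fun _ => h / eta) (fun u => u)). apply continuous_const. apply continuous_id.
  - apply (@is_RInt_ext R_NormedModule) with (fun u => h).
    { rewrite Rmin_left, Rmax_right by lra. intros u Hu. symmetry. apply phi_plateau; lra. }
    replace (h * (1 - 2 * eta)) with (scal (1 - eta - eta) h) by (unfold scal; simpl; unfold mult; simpl; ring).
    apply (@is_RInt_const R_NormedModule).
  - apply (@is_RInt_ext R_NormedModule) with (fun u => h / eta * (1 - u)).
    { rewrite Rmin_left, Rmax_right by lra. intros u Hu. unfold phi. fold h.
      assert (A1 : (1 - u) / eta < 1) by (apply (Rmult_lt_reg_r eta); try lra; unfold Rdiv; rewrite !Rmult_assoc, Rinv_l; lra).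
      assert (A2 : (1 - u) / eta <= u / eta) by (apply (Rmult_le_reg_r eta); try lra; unfold Rdiv; rewrite !Rmult_assoc, Rinv_l; lra).
      assert (A3 : 0 <= (1 - u) / eta) by (apply Rmult_le_pos; [lra|left; apply Rinv_0_lt_compat; lra]).
      rewrite (Rmin_right (u / eta)) by lra. rewrite (Rmin_right 1) by lra. rewrite Rmax_right by lra.
      match goal with |- ?a = ?b => change (@eq R a b) end. field; lra. }
    replace (h * eta / 2) with (minus (- (h / eta * (1 - 1) ^ 2 / 2)) (- (h / eta * (1 - (1 - eta)) ^ 2 / 2))) by (unfold minus, plus, opp; simpl; field; lra).
    apply (is_RInt_derive (fun u => - (h / eta * (1 - u) ^ 2 / 2))).
    + intros x _. auto_derive; auto. field; lra.
    + intros x _. apply lipschitz_cont with (Rabs (h / eta)). intros a b. right. rewrite <- Rabs_mult. rewrite <- Rabs_Ropp. f_equal. cbv beta. ring.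
Qed.

Fixpoint rsum (n : nat) (F : nat -> R) : R :=
  match n with O => 0 | S m => rsum m F + F m end.

Lemma rsum_ext n F G : (forall l, (l < n)%nat -> F l = G l) -> rsum n F = rsum n G.
Proof. induction n; simpl; intros H; auto. rewrite IHn by (intros; apply H; lia). rewrite H by lia; auto. Qed.

Lemma rsum_le n F G : (forall l, (l < n)%nat -> F l <= G l) -> rsum n F <= rsum n G.
Proof. induction n; simpl; intros H; [lra|]. assert (rsum n F <= rsum n G) by (apply IHn; intros; apply H; lia). specialize (H n ltac:(lia)). lra. Qed.


Lemma rsum_plus n F G : rsum n (fun l => F l + G l) = rsum n F + rsum n G.
Proof. induction n; simpl; [lra|]. rewrite IHn; ring. Qed.

Lemma rsum_const n c : rsum n (fun _ => c) = INR n * c.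
Proof. induction n; simpl rsum; [simpl; ring|]. rewrite IHn, S_INR; ring. Qed.

Lemma rsum_nonneg n F : (forall l, (l < n)%nat -> 0 <= F l) -> 0 <= rsum n F.
Proof. intros H. apply Rle_trans with (rsum n (fun _ => 0)). rewrite rsum_const; lra. apply rsum_le; auto. Qed.

Lemma rsum_single n F l0 : (l0 < n)%nat -> (forall l, (l < n)%nat -> l <> l0 -> F l = 0) -> rsum n F = F l0.
Proof.
  induction n; simpl; intros Hl H; [lia|].
  destruct (Nat.eq_dec l0 n) as [->|Hne].
  - rewrite (rsum_ext n F (fun _ => 0)) by (intros; apply H; lia). rewrite rsum_const. ring.
  - rewrite IHn by (auto; try lia; intros; apply H; lia). rewrite (H n) by lia. ring.
Qed.

Definition dxk (k1 : nat) := dx k1.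

Definition psi (eta : R) (k1 : nat) (del : nat -> R) (t : R) : R :=
  rsum k1 (fun l => del l / dx k1 * phi eta ((t - INR l * dx k1) / dx k1)).

Lemma dx_pos k1 : (1 <= k1)%nat -> 0 < dx k1.
Proof. intros. unfold dx. apply Rinv_0_lt_compat. apply lt_0_INR; lia. Qed.

Lemma INR_dx k1 : (1 <= k1)%nat -> INR k1 * dx k1 = 1.
Proof. intros. unfold dx. field. apply not_0_INR; lia. Qed.

Lemma rsum_cont n (F : nat -> R -> R) x : (forall l, (l < n)%nat -> continuous (F l) x) -> continuous (fun t => rsum n (fun l => F l t)) x.
Proof.
  induction n; simpl; intros H.
  - apply continuous_const.
  - apply (continuous_plus (fun t => rsum n (fun l => F l t)) (F n)). apply IHn; intros; apply H; lia. apply H; lia.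
Qed.


Lemma term_cont eta k1 (l : nat) c x : 0 < eta < 1/2 -> (1 <= k1)%nat -> continuous (fun t => c / dx k1 * phi eta ((t - INR l * dx k1) / dx k1)) x.
Proof.
  intros He Hk. apply (continuous_mult (fun _ => c / dx k1) (fun t => phi eta ((t - INR l * dx k1) / dx k1))).
  apply continuous_const.
  apply (continuous_comp (fun t => (t - INR l * dx k1) / dx k1) (phi eta)).
  - apply lipschitz_cont with (Rabs (/ dx k1)). intros a b. right. rewrite <- Rabs_mult. f_equal. unfold Rdiv. ring.
  - apply phi_cont; auto.
Qed.

Lemma psi_cont eta k1 del x : 0 < eta < 1/2 -> (1 <= k1)%nat -> continuous (psi eta k1 del) x.
Proof.
  intros He Hk. unfold psi.
  apply (rsum_cont k1 (fun l t => del l / dx k1 * phi eta ((t - INR l * dx k1) / dx k1))).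
  intros; apply term_cont; auto.
Qed.

Lemma psi_nonneg eta k1 del t : 0 < eta < 1/2 -> (1 <= k1)%nat -> (forall l, 0 <= del l) -> 0 <= psi eta k1 del t.
Proof.
  intros He Hk Hd. unfold psi. apply rsum_nonneg. intros l _. apply Rmult_le_pos.
  unfold Rdiv; apply Rmult_le_pos; auto. left; apply Rinv_0_lt_compat, dx_pos; auto.
  apply phi_nonneg; auto.
Qed.

Lemma psi_slab eta k1 del l t : 0 < eta < 1/2 -> (1 <= k1)%nat -> (l < k1)%nat ->
  INR l * dx k1 < t < INR (S l) * dx k1 ->
  psi eta k1 del t = del l / dx k1 * phi eta ((t - INR l * dx k1) / dx k1).
Proof.
  intros He Hk Hl Ht. unfold psi. apply (rsum_single k1 (fun l => del l / dx k1 * phi eta ((t - INR l * dx k1) / dx k1)) l); auto.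
  intros l' Hl' Hne. rewrite phi_out; [ring|auto|].
  pose proof (dx_pos k1 Hk). rewrite S_INR in Ht.
  destruct (Nat.lt_ge_cases l' l).
  - right. apply (Rmult_le_reg_r (dx k1)); auto. unfold Rdiv; rewrite Rmult_assoc, Rinv_l by lra.
    assert (INR (S l') <= INR l) by (apply le_INR; lia). rewrite S_INR in H1. nra.
  - left. apply (Rmult_le_reg_r (dx k1)); auto. unfold Rdiv; rewrite Rmult_assoc, Rinv_l by lra.
    assert (INR (S l) <= INR l') by (apply le_INR; lia). rewrite S_INR in H1. nra.
Qed.

Lemma is_RInt_eq_val (f : R -> R) a b (l l' : R) : is_RInt f a b l -> l = l' -> is_RInt f a b l'.
Proof. intros H ->. exact H. Qed.

Lemma term_mid eta k1 (l : nat) c : 0 < eta < 1/2 -> (1 <= k1)%nat ->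
  is_RInt (fun t => c / dx k1 * phi eta ((t - INR l * dx k1) / dx k1)) (INR l * dx k1) (INR (S l) * dx k1) c.
Proof.
  intros He Hk. pose proof (dx_pos k1 Hk) as Hdx.
  set (u := / dx k1). set (v := - INR l).
  assert (H1 : is_RInt (phi eta) (u * (INR l * dx k1) + v) (u * (INR (S l) * dx k1) + v) 1).
  { replace (u * (INR l * dx k1) + v) with 0 by (unfold u, v; field; lra).
    replace (u * (INR (S l) * dx k1) + v) with 1 by (unfold u, v; rewrite S_INR; field; lra).
    apply phi_int; auto. }
  apply (@is_RInt_comp_lin R_NormedModule) in H1.
  apply (@is_RInt_scal R_NormedModule) with (k := c) in H1.
  enough (HH : is_RInt (fun t => c / dx k1 * phi eta ((t - INR l * dx k1) / dx k1)) (INR l * dx k1) (INR (S l) * dx k1) (c * 1)) by (rewrite Rmult_1_r in HH; exact HH).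
  apply (@is_RInt_ext R_NormedModule) with (2 := H1).
  intros x _. unfold scal; simpl; unfold mult; simpl. unfold u, v. unfold Rdiv.
  replace (/ dx k1 * x + - INR l) with ((x - INR l * dx k1) * / dx k1) by (field; lra). ring.
Qed.

Lemma term_int eta k1 (l m : nat) c : 0 < eta < 1/2 -> (1 <= k1)%nat ->
  is_RInt (fun t => c / dx k1 * phi eta ((t - INR l * dx k1) / dx k1)) 0 (INR m * dx k1) (if Nat.ltb l m then c else 0).
Proof.
  intros He Hk. pose proof (dx_pos k1 Hk) as Hdx.
  assert (Hz : forall t, t <= INR l * dx k1 \/ INR (S l) * dx k1 <= t -> c / dx k1 * phi eta ((t - INR l * dx k1) / dx k1) = 0).
  { intros t Ht. rewrite phi_out; [ring|auto|]. rewrite S_INR in Ht. destruct Ht; [left|right];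
    apply (Rmult_le_reg_r (dx k1)); auto; unfold Rdiv; rewrite Rmult_assoc, Rinv_l by lra; lra. }
  destruct (Nat.ltb_spec l m).
  - apply is_RInt_eq_val with (plus (plus 0 c) 0); [|unfold plus; simpl; ring].
    apply (@is_RInt_Chasles R_NormedModule) with (INR (S l) * dx k1).
    apply (@is_RInt_Chasles R_NormedModule) with (INR l * dx k1).
    + apply (@is_RInt_ext R_NormedModule) with (fun _ => 0).
      { intros x Hx. symmetry. apply Hz. left. pose proof (Rmax_r 0 (INR l * dx k1)).
        assert (0 <= INR l * dx k1) by (apply Rmult_le_pos; [apply pos_INR|lra]).
        rewrite Rmax_right in Hx by lra. lra. }
      apply is_RInt_eq_val with (scal (INR l * dx k1 - 0) 0); [|unfold scal; simpl; unfold mult; simpl; ring].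
      apply (@is_RInt_const R_NormedModule).
    + apply term_mid; auto.
    + apply (@is_RInt_ext R_NormedModule) with (fun _ => 0).
      { intros x Hx. symmetry. apply Hz. right.
        assert (INR (S l) * dx k1 <= INR m * dx k1) by (apply Rmult_le_compat_r; [lra|apply le_INR; lia]).
        rewrite Rmin_left in Hx by lra. lra. }
      apply is_RInt_eq_val with (scal (INR m * dx k1 - INR (S l) * dx k1) 0); [|unfold scal; simpl; unfold mult; simpl; ring].
      apply (@is_RInt_const R_NormedModule).
  - apply (@is_RInt_ext R_NormedModule) with (fun _ => 0).
    { intros x Hx. symmetry. apply Hz. left.
      assert (0 <= INR m * dx k1) by (apply Rmult_le_pos; [apply pos_INR|lra]).
      assert (INR m * dx k1 <= INR l * dx k1) by (apply Rmult_le_compat_r; [lra|apply le_INR; lia]).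
      rewrite Rmax_right in Hx by lra. lra. }
    apply is_RInt_eq_val with (scal (INR m * dx k1 - 0) 0); [|unfold scal; simpl; unfold mult; simpl; ring].
    apply (@is_RInt_const R_NormedModule).
Qed.

Lemma is_RInt_rsum n (F : nat -> R -> R) (I : nat -> R) a b :
  (forall l, (l < n)%nat -> is_RInt (F l) a b (I l)) ->
  is_RInt (fun t => rsum n (fun l => F l t)) a b (rsum n I).
Proof.
  induction n; simpl; intros H.
  - apply is_RInt_eq_val with (scal (b - a) 0); [|unfold scal; simpl; unfold mult; simpl; ring].
    apply (@is_RInt_const R_NormedModule).
  - apply (@is_RInt_plus R_NormedModule (fun t => rsum n (fun l => F l t)) (F n)).
    apply IHn; intros; apply H; lia. apply H; lia.
Qed.

Lemma psi_int eta k1 del m : 0 < eta < 1/2 -> (1 <= k1)%nat ->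
  is_RInt (psi eta k1 del) 0 (INR m * dx k1) (rsum (Nat.min m k1) del).
Proof.
  intros He Hk. unfold psi.
  replace (rsum (Nat.min m k1) del) with (rsum k1 (fun l => if Nat.ltb l m then del l else 0)).
  - apply (is_RInt_rsum k1 (fun l t => del l / dx k1 * phi eta ((t - INR l * dx k1) / dx k1))).
    intros l _. apply term_int; auto.
  - clear. revert m. induction k1; intros m; simpl.
    + rewrite Nat.min_0_r. auto.
    + rewrite IHk1. destruct (Nat.ltb_spec k1 m).
      * replace (Nat.min m (S k1)) with (S (Nat.min m k1)) by lia. simpl. f_equal. f_equal. lia.
      * replace (Nat.min m (S k1)) with (Nat.min m k1) by lia. ring.
Qed.

Definition gam (d : nat) (eta : R) (k1 : nat) (D : nat -> nat -> R) (t : R) : vec :=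
  fun i => if Nat.ltb i (d - 1) then RInt (psi eta k1 (fun l => D (S l) i)) 0 t else t.
Definition gder (d : nat) (eta : R) (k1 : nat) (D : nat -> nat -> R) (t : R) : vec :=
  fun i => if Nat.ltb i (d - 1) then psi eta k1 (fun l => D (S l) i) t else 1.

Lemma deriv_within (F : R -> R) t l (P : R -> Prop) : is_derive F t l ->
  filterlim (fun s => (F s - F t) / (s - t)) (within (fun s => P s /\ s <> t) (locally t)) (locally l).
Proof.
  intros H. apply is_derive_Reals in H. apply filterlim_locally. intros eps.
  destruct (H eps (cond_pos eps)) as [delta Hd].
  unfold within. exists delta. intros y Hy [_ Hyt].
  unfold ball in Hy; simpl in Hy; unfold AbsRing_ball in Hy; simpl in Hy; unfold abs, minus, plus, opp in Hy; simpl in Hy.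
  unfold ball; simpl; unfold AbsRing_ball; simpl; unfold abs, minus, plus, opp; simpl.
  change R in y. specialize (Hd (y - t) ltac:(lra) Hy). replace (t + (y - t)) with y in Hd by ring. exact Hd.
Qed.

Lemma cont_within (F : R -> R) t (P : R -> Prop) : continuous F t -> filterlim F (within P (locally t)) (locally (F t)).
Proof. intros H. eapply filterlim_filter_le_1; [apply filter_le_within|exact H]. Qed.

Lemma is_derive_RInt0 (g : R -> R) t : (forall x, continuous g x) -> is_derive (fun s => RInt g 0 s) t (g t).
Proof.
  intros Hg. apply (is_derive_RInt g (fun s => RInt g 0 s) 0 t); auto.
  exists (mkposreal 1 Rlt_0_1). intros y _. apply (@RInt_correct R_CompleteNormedModule).
  apply (@ex_RInt_continuous R_CompleteNormedModule). intros; auto.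
Qed.

Lemma gam_admissible d eta k1 D : (2 <= d)%nat -> 0 < eta < 1/2 -> (1 <= k1)%nat -> (forall j i, 0 <= D j i) ->
  admissible d (gam d eta k1 D) (gder d eta k1 D).
Proof.
  intros Hd He Hk HD. split.
  - intros i Hi t Ht. unfold gam, gder. destruct (Nat.ltb_spec i (d - 1)).
    + split.
      * apply deriv_within. apply is_derive_RInt0. intros; apply psi_cont; auto.
      * apply cont_within with (F := fun s => psi eta k1 (fun l => D (S l) i) s). apply psi_cont; auto.
    + split.
      * apply deriv_within with (F := fun s => s). apply (is_derive_id t).
      * apply cont_within with (F := fun _ => 1). apply continuous_const.
  - intros t Ht. split.
    + intros i Hi. unfold gder. destruct (Nat.ltb_spec i (d - 1)); [apply psi_nonneg; auto|lra].
    + exists (d - 1)%nat. split; [lia|]. unfold gder. destruct (Nat.ltb_spec (d-1) (d - 1)); [lia|lra].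
Qed.

Definition nfl (x : R) : nat := Z.to_nat (Zfloor x).

Lemma nfl_bound x : 0 <= x -> INR (nfl x) <= x < INR (nfl x) + 1.
Proof.
  intros Hx. unfold nfl. assert (H0 : (0 <= Zfloor x)%Z) by (apply Zfloor_lub; simpl; lra).
  rewrite INR_IZR_INZ, Z2Nat.id by auto. apply Zfloor_bound.
Qed.

Lemma nfl_mono x y : x <= y -> (nfl x <= nfl y)%nat.
Proof. intros H. unfold nfl. pose proof (Zfloor_le x y H). lia. Qed.

Definition center (L : nat) (k : nat -> nat) : vec := fun i => (INR (k i) + /2) / INR L.

Definition PhiF (d L : nat) (f : vec -> R) (k : nat -> nat) : R :=
  if excluded_middle_informative (forall i, (i < d)%nat -> (k i < L)%nat) then f (center L k) else 0.

Lemma center_cell d L k : (1 <= L)%nat -> (forall i, (i < d)%nat -> (k i < L)%nat) ->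
  multiindex d L (fun i => S (k i)) /\ Qcell d L (fun i => S (k i)) (center L k) /\ in_open_cube d (center L k).
Proof.
  intros HL Hk. assert (HL' : 0 < INR L) by (apply lt_0_INR; lia).
  assert (Hc : forall i, (i < d)%nat -> 0 < center L k i < 1).
  { intros i Hi. unfold center. split.
    - apply Rdiv_lt_0_compat; auto. pose proof (pos_INR (k i)); lra.
    - apply (Rmult_lt_reg_r (INR L)); auto. unfold Rdiv; rewrite Rmult_assoc, Rinv_l by lra.
      assert (INR (S (k i)) <= INR L) by (apply le_INR; apply Hk; auto). rewrite S_INR in H. lra. }
  split; [|split].
  - intros i Hi. specialize (Hk i Hi). lia.
  - split. intros i Hi; specialize (Hc i Hi); lra.
    intros i Hi. unfold center. replace (INR L * ((INR (k i) + / 2) / INR L)) with (INR (k i) + /2) by (field; lra).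
    rewrite S_INR. lra.
  - intros i Hi; apply Hc; auto.
Qed.

Lemma PhiF_ext d L f k k' : (1 <= L)%nat -> piecewise_const d L f -> (forall i, (i < d)%nat -> k i = k' i) -> PhiF d L f k = PhiF d L f k'.
Proof.
  intros HL Hpc H. unfold PhiF.
  destruct (excluded_middle_informative (forall i, (i < d)%nat -> (k i < L)%nat)) as [A|A];
  destruct (excluded_middle_informative (forall i, (i < d)%nat -> (k' i < L)%nat)) as [B|B].
  - destruct (center_cell d L k HL A) as [M [Q _]].
    apply (Hpc (fun i => S (k i)) M); auto.
    destruct (center_cell d L k' HL B) as [_ [Q' _]].
    destruct Q' as [Q1 Q2]. split; auto. intros i Hi. unfold center in *. rewrite (H i Hi). apply Q2; auto.
  - exfalso. apply B. intros i Hi. rewrite <- H by auto. apply A; auto.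
  - exfalso. apply A. intros i Hi. rewrite H by auto. apply B; auto.
  - auto.
Qed.

Lemma f_PhiF d L f x : (1 <= L)%nat -> piecewise_const d L f -> (forall x, ~ in_cube d x -> f x = 0) ->
  (forall i, (i < d)%nat -> 0 <= x i) -> f x = PhiF d L f (fun i => nfl (INR L * x i)).
Proof.
  intros HL Hpc Hout Hx. assert (HL' : 0 < INR L) by (apply lt_0_INR; lia). unfold PhiF.
  destruct (excluded_middle_informative _) as [A|A].
  - destruct (center_cell d L _ HL A) as [M [Q _]]. apply (Hpc _ M); auto.
    split.
    + intros i Hi. split; auto. specialize (A i Hi). assert (Hb := nfl_bound (INR L * x i) ltac:(specialize (Hx i Hi); nra)).
      assert (INR (S (nfl (INR L * x i))) <= INR L) by (apply le_INR; lia). rewrite S_INR in H.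
      apply (Rmult_lt_reg_l (INR L)); auto. lra.
    + intros i Hi. assert (Hb := nfl_bound (INR L * x i) ltac:(specialize (Hx i Hi); nra)). rewrite S_INR. lra.
  - apply Hout. intros Hc. apply A. intros i Hi. destruct (Hc i Hi) as [_ Hlt].
    assert (Hb := nfl_bound (INR L * x i) ltac:(specialize (Hx i Hi); nra)).
    destruct (Nat.lt_ge_cases (nfl (INR L * x i)) L) as [|Hge]; auto.
    exfalso. apply le_INR in Hge. nra.
Qed.

Lemma fin_max (P : nat -> R -> Prop) : (forall v M M', P v M -> M <= M' -> P v M') ->
  (forall v, exists M, P v M) -> forall N, exists M, forall v, (v < N)%nat -> P v M.
Proof.
  intros Hm Hex N. induction N.
  - exists 0. intros; lia.
  - destruct IHN as [M HM]. destruct (Hex N) as [M' HM']. exists (Rmax M M').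
    intros v Hv. destruct (Nat.eq_dec v N) as [->|].
    + apply Hm with M'; auto. apply Rmax_r.
    + apply Hm with M. apply HM; lia. apply Rmax_l.
Qed.

Lemma fin_bound L : forall n (F : (nat -> nat) -> R), (forall k k', (forall i, (i < n)%nat -> k i = k' i) -> F k = F k') ->
  exists M, forall k, (forall i, (i < n)%nat -> (k i < L)%nat) -> F k <= M.
Proof.
  induction n; intros F HF.
  - exists (F (fun _ => O)). intros k _. right. apply HF. intros; lia.
  - assert (Hv : forall v, exists M, forall k, (forall i, (i < n)%nat -> (k i < L)%nat) -> F (fun i => if Nat.eqb i n then v else k i) <= M).
    { intros v. apply IHn. intros k k' H. apply HF. intros i Hi. destruct (Nat.eqb_spec i n); auto. apply H; lia. }
    destruct (fin_max (fun v M => forall k, (forall i, (i < n)%nat -> (k i < L)%nat) -> F (fun i => if Nat.eqb i n then v else k i) <= M))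
      with (N := L) as [M HM]; auto.
    { intros v M M' H1 H2 k Hk. specialize (H1 k Hk). lra. }
    exists M. intros k Hk. specialize (HM (k n) (Hk n ltac:(lia)) k (fun i Hi => Hk i ltac:(lia))).
    rewrite (HF k (fun i => if Nat.eqb i n then k n else k i)); auto.
    intros i Hi. destruct (Nat.eqb_spec i n); subst; auto.
Qed.

Lemma PhiF_bound d L f : (1 <= L)%nat -> piecewise_const d L f -> exists M, 0 <= M /\ forall k, PhiF d L f k <= M.
Proof.
  intros HL Hpc. destruct (fin_bound L d (PhiF d L f)) as [M HM].
  { intros; apply PhiF_ext; auto. }
  exists (Rmax 0 M). split; [apply Rmax_l|]. intros k. unfold PhiF at 1.
  destruct (excluded_middle_informative _) as [A|A].
  - eapply Rle_trans; [|apply Rmax_r]. specialize (HM k A). unfold PhiF in HM.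
    destruct (excluded_middle_informative _); [auto|contradiction].
  - apply Rmax_l.
Qed.

Lemma f_le_Linf d L f x : (1 <= L)%nat -> piecewise_const d L f -> (forall x, ~ in_cube d x -> f x = 0) ->
  (forall x, 0 <= f x) -> in_open_cube d x -> f x <= Linf_norm d f.
Proof.
  intros HL Hpc Hout Hpos Hx. destruct (PhiF_bound d L f HL Hpc) as [M [HM0 HM]].
  set (E := fun y => exists x, in_open_cube d x /\ y = Rabs (f x)).
  assert (Hub : forall y, E y -> y <= M).
  { intros y [z [Hz ->]]. rewrite Rabs_right by (apply Rle_ge; auto).
    rewrite (f_PhiF d L f z) by (auto; intros i Hi; left; apply Hz; auto). apply HM. }
  unfold Linf_norm. fold E. destruct (Lub_Rbar_correct E) as [H1 H2].
  assert (A : Rbar_le (f x) (Lub_Rbar E)).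
  { apply H1. exists x. split; auto. rewrite Rabs_right; auto. apply Rle_ge; auto. }
  assert (B : Rbar_le (Lub_Rbar E) M).
  { apply H2. intros y Hy. apply Hub; auto. }
  destruct (Lub_Rbar E); simpl in *; try contradiction; auto.
Qed.

Lemma RInt_chasles_R (g : R -> R) a b c : ex_RInt g a b -> ex_RInt g b c -> RInt g a b + RInt g b c = RInt g a c.
Proof. intros H1 H2. exact (@RInt_Chasles R_CompleteNormedModule g a b c H1 H2). Qed.

Lemma ex_RInt_cont_R (g : R -> R) a b : (forall x, continuous g x) -> ex_RInt g a b.
Proof. intros H. apply (@ex_RInt_continuous R_CompleteNormedModule). intros; auto. Qed.

Lemma RInt_mono0 (g : R -> R) s t : (forall x, continuous g x) -> (forall x, 0 <= g x) -> s <= t -> RInt g 0 s <= RInt g 0 t.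
Proof.
  intros Hc Hp Hst. rewrite <- (RInt_chasles_R g 0 s t) by (apply ex_RInt_cont_R; auto).
  assert (0 <= RInt g s t) by (apply RInt_ge_0; auto; apply ex_RInt_cont_R; auto). lra.
Qed.

Lemma gam_mono d eta k1 D i s t : 0 < eta < 1/2 -> (1 <= k1)%nat -> (forall j i, 0 <= D j i) -> s <= t -> gam d eta k1 D s i <= gam d eta k1 D t i.
Proof.
  intros He Hk HD Hst. unfold gam. destruct (Nat.ltb_spec i (d-1)); auto.
  apply RInt_mono0; auto. intros; apply psi_cont; auto. intros; apply psi_nonneg; auto.
Qed.

Lemma gam_nonneg d eta k1 D i t : 0 < eta < 1/2 -> (1 <= k1)%nat -> (forall j i, 0 <= D j i) -> 0 <= t -> 0 <= gam d eta k1 D t i.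
Proof.
  intros He Hk HD Ht. apply Rle_trans with (gam d eta k1 D 0 i). 
  - unfold gam. destruct (Nat.ltb_spec i (d-1)); [|lra]. rewrite (@RInt_point R_CompleteNormedModule). right; auto.
  - apply gam_mono; auto.
Qed.

Lemma gam_val d eta k1 D i m : 0 < eta < 1/2 -> (1 <= k1)%nat -> (i < d - 1)%nat -> (m <= k1)%nat ->
  gam d eta k1 D (INR m * dx k1) i = rsum m (fun l => D (S l) i).
Proof.
  intros He Hk Hi Hm. unfold gam. destruct (Nat.ltb_spec i (d-1)); [|lia].
  rewrite (is_RInt_unique _ _ _ _ (psi_int eta k1 (fun l => D (S l) i) m He Hk)). f_equal. lia.
Qed.

Lemma prodn_cont n (w : R -> nat -> R) x : (forall i, (i < n)%nat -> continuous (fun t => w t i) x) -> continuous (fun t => prodn n (w t)) x.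
Proof.
  induction n; simpl; intros H. apply continuous_const.
  apply (continuous_mult (fun t => prodn n (w t)) (fun t => w t n)). apply IHn; intros; apply H; lia. apply H; lia.
Qed.

Definition FJ (d : nat) (f : vec -> R) (g w : R -> vec) (t : R) : R := droot d (f (g t)) * droot d (prodn d (w t)).

Lemma FJ_ex d L f eta k1 D : (2 <= d)%nat -> (1 <= L)%nat -> piecewise_const d L f -> (forall x, ~ in_cube d x -> f x = 0) ->
  0 < eta < 1/2 -> (1 <= k1)%nat -> (forall j i, 0 <= D j i) ->
  ex_RInt (FJ d f (gam d eta k1 D) (gder d eta k1 D)) 0 1.
Proof.
  intros Hd HL Hpc Hout He Hk HD.
  apply (int_step d (fun k => droot d (PhiF d L f k)) (fun t => droot d (prodn d (gder d eta k1 D t)))) with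
    (N := nsum d (fun i => nfl (INR L * gam d eta k1 D 1 i) - nfl (INR L * gam d eta k1 D 0 i))%nat)
    (k := fun i t => nfl (INR L * gam d eta k1 D t i)).
  - intros k k' H. f_equal. apply PhiF_ext; auto.
  - intros t. apply (continuous_comp (fun t => prodn d (gder d eta k1 D t)) (droot d)).
    + apply prodn_cont. intros i Hi. unfold gder. destruct (Nat.ltb_spec i (d-1)).
      apply psi_cont; auto. apply continuous_const.
    + apply droot_cont; lia.
  - lra.
  - intros i s t Hi H1 H2 H3. apply nfl_mono. apply Rmult_le_compat_l. apply pos_INR. apply gam_mono; auto.
  - lia.
  - intros t Ht. unfold FJ. f_equal. f_equal. apply f_PhiF; auto. intros i Hi. apply gam_nonneg; auto; lra.
Qed.

Lemma slab_sum (F : R -> R) k1 : (1 <= k1)%nat -> ex_RInt F 0 1 ->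
  RInt F 0 1 = rsum k1 (fun l => RInt F (INR l * dx k1) (INR (S l) * dx k1)).
Proof.
  intros Hk Hex. pose proof (dx_pos k1 Hk) as Hdx.
  assert (Hm : forall m, (m <= k1)%nat -> RInt F 0 (INR m * dx k1) = rsum m (fun l => RInt F (INR l * dx k1) (INR (S l) * dx k1))).
  { induction m; intros Hm.
    - simpl. rewrite Rmult_0_l. exact (@RInt_point R_CompleteNormedModule 0 F).
    - replace (rsum (S m) _) with (rsum m (fun l => RInt F (INR l * dx k1) (INR (S l) * dx k1)) + RInt F (INR m * dx k1) (INR (S m) * dx k1)) by reflexivity. rewrite <- IHm by lia.
      assert (H1 : INR m * dx k1 <= INR (S m) * dx k1) by (apply Rmult_le_compat_r; [lra|apply le_INR; lia]).
      assert (H2 : INR (S m) * dx k1 <= 1) by (rewrite <- (INR_dx k1 Hk); apply Rmult_le_compat_r; [lra|apply le_INR; lia]).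
      assert (H0 : 0 <= INR m * dx k1) by (apply Rmult_le_pos; [apply pos_INR|lra]).
      assert (E1 : ex_RInt F 0 (INR (S m) * dx k1)) by (apply (@ex_RInt_Chasles_1 R_CompleteNormedModule) with 1; auto; lra).
      symmetry. apply RInt_chasles_R.
      + apply (@ex_RInt_Chasles_1 R_CompleteNormedModule) with (INR (S m) * dx k1); auto.
      + apply (@ex_RInt_Chasles_2 R_CompleteNormedModule) with 0; auto. }
  rewrite <- (Hm k1) by lia. rewrite INR_dx; auto.
Qed.

Lemma slab_lower (F : R -> R) a b eta v : a < b -> 0 < eta < 1/2 -> ex_RInt F a b ->
  (forall t, a < t < b -> 0 <= F t) ->
  (forall t, a + eta * (b - a) <= t <= b - eta * (b - a) -> v <= F t) ->
  (1 - 2 * eta) * (b - a) * v <= RInt F a b.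
Proof.
  intros Hab He Hex H0 Hv.
  set (a' := a + eta * (b - a)). set (b' := b - eta * (b - a)).
  assert (Ha' : a <= a' <= b) by (unfold a'; nra). assert (Hb' : a' <= b' <= b) by (unfold a', b'; nra).
  assert (E1 : ex_RInt F a a') by (apply (@ex_RInt_Chasles_1 R_CompleteNormedModule) with b; auto).
  assert (E2 : ex_RInt F a' b) by (apply (@ex_RInt_Chasles_2 R_CompleteNormedModule) with a; auto).
  assert (E3 : ex_RInt F a' b') by (apply (@ex_RInt_Chasles_1 R_CompleteNormedModule) with b; auto).
  assert (E4 : ex_RInt F b' b) by (apply (@ex_RInt_Chasles_2 R_CompleteNormedModule) with a'; auto).
  rewrite <- (RInt_chasles_R F a a' b) by auto. rewrite <- (RInt_chasles_R F a' b' b) by auto.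
  assert (0 <= RInt F a a') by (apply RInt_ge_0; [lra|auto|intros; apply H0; lra]).
  assert (0 <= RInt F b' b) by (apply RInt_ge_0; [lra|auto|intros; apply H0; lra]).
  assert (RInt (fun _ => v) a' b' <= RInt F a' b').
  { apply RInt_le; [lra|apply ex_RInt_const|auto|intros; apply Hv; unfold a', b' in *; lra]. }
  rewrite RInt_const in H2. unfold scal in H2; simpl in H2; unfold mult in H2; simpl in H2.
  replace ((1 - 2 * eta) * (b - a) * v) with ((b' - a') * v) by (unfold a', b'; ring). lra.
Qed.

Definition Pv (k1 k2 : nat) (b : nat -> nat -> nat) (j i : nat) : R :=
  if Nat.eqb j 0 then 0 else Rmax 0 (INR (b j i) - /2) * dy k1 k2.
Definition Dv (k1 k2 : nat) (b : nat -> nat -> nat) (j i : nat) : R :=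
  Rmax 0 (Pv k1 k2 b j i - Pv k1 k2 b (j - 1) i).

Lemma dy_pos k1 k2 : (1 <= k1)%nat -> (1 <= k2)%nat -> 0 < dy k1 k2.
Proof. intros. unfold dy. apply Rdiv_lt_0_compat. apply dx_pos; auto. apply lt_0_INR; lia. Qed.

Lemma dy_full k1 k2 : (1 <= k1)%nat -> (1 <= k2)%nat -> INR (k1 * k2) * dy k1 k2 = 1.
Proof.
  intros. unfold dy, dx. rewrite mult_INR. field. split; apply not_0_INR; lia.
Qed.

Lemma dx_le1 k1 : (1 <= k1)%nat -> dx k1 <= 1.
Proof. intros. unfold dx. rewrite <- Rinv_1. apply Rinv_le_contravar. lra. apply (le_INR 1); auto. Qed.

Lemma dy_le1 k1 k2 : (1 <= k1)%nat -> (1 <= k2)%nat -> dy k1 k2 <= 1.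
Proof.
  intros. pose proof (dy_pos k1 k2 H H0). rewrite <- (dy_full k1 k2) by auto.
  assert (1 <= INR (k1 * k2)) by (apply (le_INR 1); nia). nra.
Qed.

Lemma Pv_nonneg k1 k2 b j i : (1 <= k1)%nat -> (1 <= k2)%nat -> 0 <= Pv k1 k2 b j i.
Proof. intros. unfold Pv. destruct (Nat.eqb j 0); [lra|]. apply Rmult_le_pos. apply Rmax_l. left; apply dy_pos; auto. Qed.

Lemma Pv_lt1 d k1 k2 b j i : (1 <= k1)%nat -> (1 <= k2)%nat -> in_Phi d k1 k2 b -> (1 <= j <= k1)%nat -> (i < d - 1)%nat ->
  Pv k1 k2 b j i < 1.
Proof.
  intros Hk1 Hk2 [_ Hb] Hj Hi. unfold Pv. destruct (Nat.eqb_spec j 0); [lra|].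
  pose proof (dy_pos k1 k2 Hk1 Hk2). pose proof (dy_full k1 k2 Hk1 Hk2).
  assert (INR (b j i) <= INR (k1 * k2)) by (apply le_INR; apply Hb; auto).
  destruct (Rle_dec 0 (INR (b j i) - /2)).
  - rewrite Rmax_right by lra. nra.
  - rewrite Rmax_left by lra. lra.
Qed.

Lemma Pv_mono d k1 k2 b m i : (1 <= k1)%nat -> (1 <= k2)%nat -> in_Phi d k1 k2 b -> (m < k1)%nat -> (i < d - 1)%nat ->
  Pv k1 k2 b m i <= Pv k1 k2 b (S m) i.
Proof.
  intros Hk1 Hk2 [Hb _] Hm Hi. pose proof (dy_pos k1 k2 Hk1 Hk2). unfold Pv.
  destruct (Nat.eqb_spec m 0). simpl. apply Rmult_le_pos; [apply Rmax_l|lra].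
  simpl. apply Rmult_le_compat_r; [lra|]. apply Rle_max_compat_l.
  assert (INR (b m i) <= INR (b (S m) i)) by (apply le_INR; apply Hb; lia). lra.
Qed.

Lemma Dv_nonneg k1 k2 b j i : 0 <= Dv k1 k2 b j i.
Proof. apply Rmax_l. Qed.

Lemma Dv_sum d k1 k2 b m i : (1 <= k1)%nat -> (1 <= k2)%nat -> in_Phi d k1 k2 b -> (m <= k1)%nat -> (i < d - 1)%nat ->
  rsum m (fun l => Dv k1 k2 b (S l) i) = Pv k1 k2 b m i.
Proof.
  intros Hk1 Hk2 Hb. induction m; intros Hm Hi.
  - simpl. unfold Pv. simpl. auto.
  - change (rsum m (fun l => Dv k1 k2 b (S l) i) + Dv k1 k2 b (S m) i = Pv k1 k2 b (S m) i).
    rewrite IHm by lia. unfold Dv. replace (S m - 1)%nat with m by lia.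
    pose proof (Pv_mono d k1 k2 b m i Hk1 Hk2 Hb ltac:(lia) Hi). rewrite Rmax_right; lra.
Qed.

Lemma Dv_le1 d k1 k2 b j i : (1 <= k1)%nat -> (1 <= k2)%nat -> in_Phi d k1 k2 b -> (1 <= j <= k1)%nat -> (i < d - 1)%nat ->
  Dv k1 k2 b j i <= 1.
Proof.
  intros. unfold Dv. apply Rmax_lub. lra. pose proof (Pv_lt1 d k1 k2 b j i H H0 H1 H2 H3).
  pose proof (Pv_nonneg k1 k2 b (j-1) i H H0). lra.
Qed.

Lemma gam_P d eta k1 k2 b m i : (2 <= d)%nat -> 0 < eta < 1/2 -> (1 <= k1)%nat -> (1 <= k2)%nat -> in_Phi d k1 k2 b -> (m <= k1)%nat -> (i < d - 1)%nat ->
  gam d eta k1 (Dv k1 k2 b) (INR m * dx k1) i = Pv k1 k2 b m i.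
Proof.
  intros. rewrite gam_val; auto. apply Dv_sum with d; auto.
Qed.

Lemma box_in d eta k1 k2 b l t : (2 <= d)%nat -> 0 < eta < 1/2 -> (1 <= k1)%nat -> (1 <= k2)%nat -> in_Phi d k1 k2 b ->
  (l < k1)%nat -> (forall i, (i < d - 1)%nat -> (1 <= b (S l) i)%nat) ->
  INR l * dx k1 < t < INR (S l) * dx k1 ->
  Rbox d k1 k2 b (S l) (gam d eta k1 (Dv k1 k2 b) t).
Proof.
  intros Hd He Hk1 Hk2 Hb Hl Hb1 Ht.
  pose proof (dx_pos k1 Hk1) as Hdx. pose proof (dy_pos k1 k2 Hk1 Hk2) as Hdy.
  assert (HD : forall j i, 0 <= Dv k1 k2 b j i) by (intros; apply Dv_nonneg).
  assert (Ht1 : INR (S l) * dx k1 <= 1) by (rewrite <- (INR_dx k1 Hk1); apply Rmult_le_compat_r; [lra|apply le_INR; lia]).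
  assert (Ht0 : 0 <= INR l * dx k1) by (apply Rmult_le_pos; [apply pos_INR|lra]).
  assert (Hlo : forall i, (i < d - 1)%nat -> Pv k1 k2 b l i <= gam d eta k1 (Dv k1 k2 b) t i).
  { intros i Hi. rewrite <- (gam_P d eta k1 k2 b l i) by (auto; lia). apply gam_mono; auto; lra. }
  assert (Hup : forall i, (i < d - 1)%nat -> gam d eta k1 (Dv k1 k2 b) t i <= Pv k1 k2 b (S l) i).
  { intros i Hi. rewrite <- (gam_P d eta k1 k2 b (S l) i) by (auto; lia). apply gam_mono; auto; lra. }
  assert (HPup : forall i, (i < d - 1)%nat -> Pv k1 k2 b (S l) i < INR (b (S l) i) * dy k1 k2).
  { intros i Hi. unfold Pv. simpl. assert (1 <= INR (b (S l) i)) by (apply (le_INR 1); apply Hb1; auto).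
    rewrite Rmax_right by lra. nra. }
  assert (HPlo : forall i, (i < d - 1)%nat -> zpt d k1 k2 b l i - dy k1 k2 <= Pv k1 k2 b l i).
  { intros i Hi. unfold zpt, Pv. destruct l as [|l']. simpl. lra.
    replace (Nat.ltb i (d - 1)) with true by (symmetry; apply Nat.ltb_lt; auto). simpl.
    assert (INR (b (S l') i) - 1 <= Rmax 0 (INR (b (S l') i) - / 2)) by (eapply Rle_trans; [|apply Rmax_r]; lra). nra. }
  split.
  - intros i Hi. destruct (Nat.ltb_spec i (d - 1)).
    + split. eapply Rle_trans; [apply (Pv_nonneg k1 k2 b l i); auto|apply Hlo; auto].
      eapply Rle_lt_trans. apply Hup; auto. apply Pv_lt1 with d; auto; lia.
    + unfold gam. replace (Nat.ltb i (d - 1)) with false by (symmetry; apply Nat.ltb_ge; auto). lra.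
  - intros i Hi. simpl (S l - 1)%nat. rewrite Nat.sub_0_r.
    destruct (Nat.ltb_spec i (d - 1)) as [Hi'|Hi'].
    + split.
      * eapply Rle_trans; [apply HPlo; auto|apply Hlo; auto].
      * unfold zpt. replace (Nat.ltb i (d - 1)) with true by (symmetry; apply Nat.ltb_lt; auto).
        eapply Rle_lt_trans. apply Hup; auto. apply HPup; auto.
    + unfold gam. replace (Nat.ltb i (d - 1)) with false by (symmetry; apply Nat.ltb_ge; auto).
      unfold zpt. destruct l as [|l'].
      * simpl. replace (Nat.ltb i (d - 1)) with false by (symmetry; apply Nat.ltb_ge; auto). simpl in Ht. lra.
      * replace (Nat.ltb i (d - 1)) with false by (symmetry; apply Nat.ltb_ge; auto). lra.
Qed.

Lemma iint_zero m y : iint m (fun _ => 0) y = 0.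
Proof.
  revert y. induction m; intros y; simpl; auto.
  rewrite (RInt_ext _ (fun _ => 0)) by (intros; apply IHm).
  rewrite RInt_const. unfold scal; simpl; unfold mult; simpl. ring.
Qed.

Definition lob d k1 k2 b j i := zpt d k1 k2 b (j - 1) i - (if Nat.ltb i (d - 1) then dy k1 k2 else 0).
Definition upb d k1 k2 b j i := zpt d k1 k2 b j i.
Definition eb d k1 k2 b j i (t : R) := indic ((0 <= t < 1) /\ lob d k1 k2 b j i <= t < upb d k1 k2 b j i).

Lemma pbj_const d k1 k2 f b j c : (forall x, Rbox d k1 k2 b j x -> f x = c) ->
  pbj d k1 k2 f b j = c * prodn d (fun i => RInt (eb d k1 k2 b j i) 0 1).
Proof.
  intros Hc. unfold pbj, cube_integral.
  replace (fun x => indic (Rbox d k1 k2 b j x) * f x) with (fun x : vec => c * prodn d (fun i => eb d k1 k2 b j i (x i))).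
  - rewrite iint_prod; auto.
    + f_equal. apply prodn_ext. intros i Hi. destruct (Nat.ltb_spec i d); [auto|lia].
    + intros i Hi. destruct (indic_int (lob d k1 k2 b j i) (upb d k1 k2 b j i)) as [I [HI _]]. eexists; exact HI.
  - apply functional_extensionality. intros x. unfold eb.
    rewrite <- (indic_forall d (fun i => (0 <= x i < 1) /\ lob d k1 k2 b j i <= x i < upb d k1 k2 b j i)).
    destruct (classic (Rbox d k1 k2 b j x)) as [H|H].
    + rewrite !indic_true; auto. rewrite Hc; auto. ring.
      intros i Hi. destruct H as [H1 H2]. split; auto. apply H2; auto.
    + rewrite !indic_false; auto. ring.
      intros H'. apply H. split. intros i Hi; apply H'; auto. intros i Hi; apply H'; auto.
Qed.

Lemma eb_int d k1 k2 b j i : 0 <= RInt (eb d k1 k2 b j i) 0 1 <= Rmax 0 (upb d k1 k2 b j i - lob d k1 k2 b j i).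
Proof.
  destruct (indic_int (lob d k1 k2 b j i) (upb d k1 k2 b j i)) as [I [HI HB]].
  unfold eb. rewrite (is_RInt_unique _ _ _ _ HI). auto.
Qed.

Lemma pbj_empty d k1 k2 f b j i : (1 <= j)%nat -> (i < d - 1)%nat -> b j i = 0%nat -> pbj d k1 k2 f b j = 0.
Proof.
  intros Hj Hi Hb. unfold pbj, cube_integral.
  replace (fun x => indic (Rbox d k1 k2 b j x) * f x) with (fun _ : vec => 0). apply iint_zero.
  apply functional_extensionality. intros x. rewrite indic_false. ring.
  intros [H1 H2]. destruct (H1 i ltac:(lia)) as [A _]. destruct (H2 i ltac:(lia)) as [_ B].
  unfold zpt in B. destruct j; [lia|]. replace (Nat.ltb i (d - 1)) with true in B by (symmetry; apply Nat.ltb_lt; auto).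
  rewrite Hb in B. simpl in B. lra.
Qed.

Lemma inH_const d L k1 k2 f b j : (1 <= L)%nat -> piecewise_const d L f -> (forall x, ~ in_cube d x -> f x = 0) ->
  (forall x, 0 <= f x) -> inH d L k1 k2 b j ->
  exists c, 0 <= c <= Linf_norm d f /\ forall x, Rbox d k1 k2 b j x -> f x = c.
Proof.
  intros HL Hpc Hout Hpos [alpha [Hm Hsub]].
  assert (HL' : 0 < INR L) by (apply lt_0_INR; lia).
  set (xa := fun i => (INR (alpha i) - /2) / INR L).
  assert (Hxa : Qcell d L alpha xa /\ in_open_cube d xa).
  { assert (Hc : forall i, (i < d)%nat -> 0 < xa i < 1).
    { intros i Hi. specialize (Hm i Hi). unfold xa. assert (1 <= INR (alpha i)) by (apply (le_INR 1); lia).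
      assert (INR (alpha i) <= INR L) by (apply le_INR; lia). split.
      apply Rdiv_lt_0_compat; lra.
      apply (Rmult_lt_reg_r (INR L)); auto. unfold Rdiv; rewrite Rmult_assoc, Rinv_l by lra. lra. }
    split; [split|].
    - intros i Hi; specialize (Hc i Hi); lra.
    - intros i Hi. unfold xa. replace (INR L * ((INR (alpha i) - / 2) / INR L)) with (INR (alpha i) - /2) by (field; lra). lra.
    - intros i Hi; auto. }
  exists (f xa). split; [split|].
  - apply Hpos.
  - apply f_le_Linf with L; auto. apply Hxa.
  - intros x Hx. apply (Hpc alpha Hm); auto. apply Hxa.
Qed.

Lemma prodn_const n c : prodn n (fun _ => c) = c ^ n.
Proof. induction n; simpl; [auto|]. rewrite IHn. ring. Qed.

Lemma prodn_scale n w s : prodn n (fun i => w i * s) = prodn n w * s ^ n.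
Proof. induction n; simpl; [ring|]. rewrite IHn. ring. Qed.

Lemma prod_diff n x y e : 0 <= e -> (forall i, (i < n)%nat -> 0 <= x i <= y i /\ y i <= 3 /\ y i - x i <= e) ->
  prodn n y - prodn n x <= INR n * 3 ^ n * e.
Proof.
  intros He. induction n; intros H. simpl; lra.
  change (prodn (S n) y) with (prodn n y * y n). change (prodn (S n) x) with (prodn n x * x n). change (3 ^ S n) with (3 * 3 ^ n).
  assert (IH := IHn (fun i Hi => H i ltac:(lia))). destruct (H n ltac:(lia)) as [[H1 H2] [H3 H4]].
  assert (Py : prodn n y <= 3 ^ n) by (rewrite <- prodn_const; apply prodn_le; intros i Hi; destruct (H i ltac:(lia)) as [[A B] [C _]]; lra).
  assert (Py0 : 0 <= prodn n y) by (apply prodn_nonneg; intros i Hi; destruct (H i ltac:(lia)) as [[A B] _]; lra).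
  assert (Px0 : 0 <= prodn n x) by (apply prodn_nonneg; intros i Hi; destruct (H i ltac:(lia)) as [[A B] _]; lra).
  assert (Pxy : prodn n x <= prodn n y) by (apply prodn_le; intros i Hi; destruct (H i ltac:(lia)) as [[A B] _]; lra).
  assert (P3 : 0 < 3 ^ n) by (apply pow_lt; lra).
  pose proof (pos_INR n). rewrite S_INR.
  replace (prodn n y * y n - prodn n x * x n) with (prodn n y * (y n - x n) + x n * (prodn n y - prodn n x)) by ring.
  assert (prodn n y * (y n - x n) <= 3 ^ n * e) by (apply Rmult_le_compat; lra).
  assert (x n * (prodn n y - prodn n x) <= 3 * (INR n * 3 ^ n * e)) by (apply Rmult_le_compat; lra).
  assert (0 <= INR n * 3 ^ n * e) by (apply Rmult_le_pos; [apply Rmult_le_pos|]; lra).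
  nra.
Qed.

Definition Kc (d : nat) : R := 2 * INR d * 3 ^ d.

Lemma FJ_nonneg d f g w t : 0 <= FJ d f g w t.
Proof. unfold FJ. apply Rmult_le_pos; apply droot_nonneg. Qed.

Lemma slab_bound d L f eta k1 k2 b l : (2 <= d)%nat -> (1 <= L)%nat -> piecewise_const d L f ->
  (forall x, ~ in_cube d x -> f x = 0) -> (forall x, 0 <= f x) ->
  0 < eta < 1/2 -> (1 <= k1)%nat -> (1 <= k2)%nat -> in_Phi d k1 k2 b -> (l < k1)%nat ->
  indic (inH d L k1 k2 b (S l)) * droot d (pbj d k1 k2 f b (S l)) <=
  RInt (FJ d f (gam d eta k1 (Dv k1 k2 b)) (gder d eta k1 (Dv k1 k2 b))) (INR l * dx k1) (INR (S l) * dx k1)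
  + (2 * eta * droot d (Linf_norm d f) + droot d (Linf_norm d f * Kc d * dx k1 * dy k1 k2)).
Proof.
  intros Hd HL Hpc Hout Hpos He Hk1 Hk2 Hb Hl.
  set (D := Dv k1 k2 b). set (F := FJ d f (gam d eta k1 D) (gder d eta k1 D)).
  set (a := INR l * dx k1). set (bb := INR (S l) * dx k1).
  pose proof (dx_pos k1 Hk1) as Hdx. pose proof (dy_pos k1 k2 Hk1 Hk2) as Hdy.
  assert (Hd1 : (1 <= d)%nat) by lia.
  assert (HD : forall j i, 0 <= D j i) by (intros; apply Dv_nonneg).
  assert (Hab : a < bb) by (unfold a, bb; rewrite S_INR; lra).
  assert (Ha0 : 0 <= a) by (unfold a; apply Rmult_le_pos; [apply pos_INR|lra]).
  assert (Hb1 : bb <= 1) by (unfold bb; rewrite <- (INR_dx k1 Hk1); apply Rmult_le_compat_r; [lra|apply le_INR; lia]).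
  assert (Hex : ex_RInt F a bb).
  { pose proof (FJ_ex d L f eta k1 D Hd HL Hpc Hout He Hk1 HD) as E.
    apply (@ex_RInt_Chasles_1 R_CompleteNormedModule) with 1; [lra|].
    apply (@ex_RInt_Chasles_2 R_CompleteNormedModule) with 0; [lra|]. exact E. }
  assert (HT0 : 0 <= RInt F a bb) by (apply RInt_ge_0; [lra|auto|intros; apply FJ_nonneg]).
  assert (HL0 : 0 <= Linf_norm d f).
  { destruct (center_cell d L (fun _ => O) HL) as [_ [_ Ho]]. intros; lia.
    eapply Rle_trans; [apply (Hpos (center L (fun _ => O)))|]. apply f_le_Linf with L; auto. }
  assert (Herr : 0 <= 2 * eta * droot d (Linf_norm d f) + droot d (Linf_norm d f * Kc d * dx k1 * dy k1 k2)).
  { pose proof (droot_nonneg d (Linf_norm d f)). pose proof (droot_nonneg d (Linf_norm d f * Kc d * dx k1 * dy k1 k2)). nra. }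
  destruct (classic (inH d L k1 k2 b (S l))) as [HH|HH].
  2:{ rewrite indic_false by auto. rewrite Rmult_0_l. fold D F a bb. lra. }
  rewrite indic_true by auto. rewrite Rmult_1_l. fold D F a bb.
  destruct (inH_const d L k1 k2 f b (S l) HL Hpc Hout Hpos HH) as [c [[Hc0 HcL] Hc]].
  destruct (classic (exists i, (i < d - 1)%nat /\ b (S l) i = O)) as [[i [Hi Hbi]]|Hnz].
  { rewrite (pbj_empty d k1 k2 f b (S l) i) by (auto; lia). rewrite droot_0. lra. }
  assert (Hb1' : forall i, (i < d - 1)%nat -> (1 <= b (S l) i)%nat).
  { intros i Hi. destruct (Nat.eq_dec (b (S l) i) 0); [exfalso; apply Hnz; eauto|lia]. }
  set (x := fun i => if Nat.ltb i (d - 1) then D (S l) i else dx k1).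
  set (y := fun i => if Nat.ltb i (d - 1) then D (S l) i + 2 * dy k1 k2 else dx k1).
  set (W := prodn d (fun i => if Nat.ltb i (d - 1) then D (S l) i / dx k1 else 1)).
  set (V := droot d (c * prodn d x)).
  assert (HW0 : 0 <= W).
  { apply prodn_nonneg. intros i Hi. destruct (Nat.ltb i (d-1)); [|lra]. apply Rmult_le_pos; auto. left; apply Rinv_0_lt_compat; lra. }
  assert (HDle : forall i, (i < d - 1)%nat -> D (S l) i <= 1) by (intros; apply Dv_le1 with d; auto; lia).
  assert (Hx01 : forall i, (i < d)%nat -> 0 <= x i <= 1).
  { intros i Hi. unfold x. destruct (Nat.ltb_spec i (d-1)); [split; auto|pose proof (dx_le1 k1 Hk1); lra]. }
  assert (HA : (1 - 2 * eta) * V <= RInt F a bb).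
  { assert (EV : V = (bb - a) * (droot d c * droot d W)).
    { unfold V. replace (prodn d x) with (W * dx k1 ^ d).
      - rewrite droot_mult, droot_mult, droot_of_pow; auto; try lra; try (apply pow_le; lra).
        unfold a, bb; rewrite S_INR; ring. apply Rmult_le_pos; auto; apply pow_le; lra.
      - unfold W. rewrite <- prodn_scale. apply prodn_ext. intros i Hi. unfold x.
        destruct (Nat.ltb i (d-1)); [field; lra|ring]. }
    rewrite EV. rewrite <- Rmult_assoc. apply slab_lower; auto.
    - intros; apply FJ_nonneg.
    - intros t Ht. assert (Hta : a < t < bb) by nra.
      unfold F, FJ. rewrite (Hc (gam d eta k1 D t) (box_in d eta k1 k2 b l t Hd He Hk1 Hk2 Hb Hl Hb1' Hta)).
      apply Rmult_le_compat_l; [apply droot_nonneg|]. apply droot_mono; auto.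
      unfold W. apply prodn_le. intros i Hi. unfold gder. destruct (Nat.ltb_spec i (d-1)); [|lra].
      rewrite psi_slab with (l := l); auto. fold a.
      rewrite phi_plateau; auto.
      + assert (0 <= D (S l) i / dx k1) by (apply Rmult_le_pos; auto; left; apply Rinv_0_lt_compat; lra).
        assert (1 <= / (1 - eta)) by (rewrite <- Rinv_1; apply Rinv_le_contravar; lra). nra.
      + unfold a, bb in Ht |- *. rewrite S_INR in Ht. split; apply (Rmult_le_reg_r (dx k1)); auto;
        unfold Rdiv; rewrite Rmult_assoc, Rinv_l by lra; nra. }
  assert (HI : forall i, (i < d)%nat -> 0 <= RInt (eb d k1 k2 b (S l) i) 0 1 <= y i).
  { intros i Hi. destruct (eb_int d k1 k2 b (S l) i) as [I0 I1]. split; auto.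
    eapply Rle_trans; [exact I1|]. apply Rmax_lub.
    - unfold y. destruct (Nat.ltb i (d-1)); [pose proof (HD (S l) i); lra|lra].
    - unfold upb, lob, y. replace (S l - 1)%nat with l by lia.
      destruct (Nat.ltb_spec i (d-1)) as [Hi'|Hi'].
      + unfold zpt. replace (Nat.ltb i (d - 1)) with true by (symmetry; apply Nat.ltb_lt; auto).
        assert (HDge : Pv k1 k2 b (S l) i - Pv k1 k2 b l i <= D (S l) i) by (unfold D, Dv; replace (S l - 1)%nat with l by lia; apply Rmax_r).
        assert (HPj : Pv k1 k2 b (S l) i = (INR (b (S l) i) - /2) * dy k1 k2).
        { unfold Pv. simpl. rewrite Rmax_right; auto. assert (1 <= INR (b (S l) i)) by (apply (le_INR 1); apply Hb1'; auto). lra. }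
        destruct l as [|l'].
        * assert (Pv k1 k2 b 0 i = 0) by reflexivity. simpl. lra.
        * assert (HPl : Pv k1 k2 b (S l') i <= (INR (b (S l') i) + /2) * dy k1 k2).
          { unfold Pv. simpl. apply Rmult_le_compat_r; [lra|]. apply Rmax_lub; pose proof (pos_INR (b (S l') i)); lra. }
          lra.
      + unfold zpt. replace (Nat.ltb i (d - 1)) with false by (symmetry; apply Nat.ltb_ge; auto).
        destruct l as [|l']; [simpl; lra|].
        replace (Nat.ltb i (d - 1)) with false by (symmetry; apply Nat.ltb_ge; auto). rewrite (S_INR (S l')). lra. }
  assert (Hxy : forall i, (i < d)%nat -> 0 <= x i <= y i /\ y i <= 3 /\ y i - x i <= 2 * dy k1 k2).
  { intros i Hi. pose proof (dy_le1 k1 k2 Hk1 Hk2). pose proof (dx_le1 k1 Hk1). unfold x, y.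
    destruct (Nat.ltb_spec i (d-1)). specialize (HDle i H1). specialize (HD (S l) i). lra. lra. }
  assert (Hpbj : pbj d k1 k2 f b (S l) <= c * prodn d y).
  { rewrite (pbj_const d k1 k2 f b (S l) c Hc). apply Rmult_le_compat_l; auto. apply prodn_le. auto. }
  assert (Hdiff : prodn d y - prodn d x <= Kc d * dx k1 * dy k1 k2).
  { replace d with (S (d - 1)) at 1 2 by lia. change (prodn (S (d-1)) y) with (prodn (d-1) y * y (d-1)%nat).
    change (prodn (S (d-1)) x) with (prodn (d-1) x * x (d-1)%nat).
    unfold y at 2, x at 2. rewrite Nat.ltb_irrefl.
    assert (Hpd := prod_diff (d-1) x y (2 * dy k1 k2) ltac:(lra) (fun i Hi => Hxy i ltac:(lia))).
    assert (INR (d - 1) * 3 ^ (d - 1) * (2 * dy k1 k2) <= Kc d * dy k1 k2).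
    { unfold Kc. assert (INR (d-1) <= INR d) by (apply le_INR; lia). assert (3 ^ (d-1) <= 3 ^ d) by (apply Rle_pow; [lra|lia]).
      assert (0 <= 3 ^ (d-1)) by (apply pow_le; lra). pose proof (pos_INR (d-1)).
      assert (INR (d-1) * 3 ^ (d-1) <= INR d * 3 ^ d) by (apply Rmult_le_compat; lra). nra. }
    replace (prodn (d - 1) y * dx k1 - prodn (d - 1) x * dx k1) with ((prodn (d - 1) y - prodn (d - 1) x) * dx k1) by ring.
    replace (Kc d * dx k1 * dy k1 k2) with ((Kc d * dy k1 k2) * dx k1) by ring.
    apply Rmult_le_compat_r; lra. }
  assert (Hxy0 : prodn d x <= prodn d y) by (apply prodn_le; intros i Hi; destruct (Hxy i Hi) as [[A B] _]; lra).
  assert (Hx0 : 0 <= prodn d x) by (apply prodn_nonneg; intros i Hi; apply Hx01; auto).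
  assert (HB : droot d (pbj d k1 k2 f b (S l)) <= V + droot d (Linf_norm d f * Kc d * dx k1 * dy k1 k2)).
  { eapply Rle_trans. apply droot_mono; [auto|exact Hpbj].
    replace (c * prodn d y) with (c * prodn d x + c * (prodn d y - prodn d x)) by ring.
    eapply Rle_trans. apply droot_subadd; auto. apply Rmult_le_pos; auto. apply Rmult_le_pos; lra.
    apply Rplus_le_compat_l. apply droot_mono; auto.
    assert (0 <= Kc d * dx k1 * dy k1 k2) by lra.
    replace (Linf_norm d f * Kc d * dx k1 * dy k1 k2) with (Linf_norm d f * (Kc d * dx k1 * dy k1 k2)) by ring.
    apply Rmult_le_compat; lra. }
  assert (HC : V <= droot d (Linf_norm d f)).
  { unfold V. apply droot_mono; auto. replace (Linf_norm d f) with (Linf_norm d f * 1) by ring.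
    apply Rmult_le_compat; auto. rewrite <- (pow1 d). rewrite <- prodn_const. apply prodn_le. auto. }
  assert (HV0 : 0 <= V) by apply droot_nonneg.
  nra.
Qed.

Lemma sum_f_R0_rsum F n : sum_f_R0 F n = rsum (S n) F.
Proof. induction n; simpl; [ring|]. rewrite IHn. simpl. ring. Qed.

Lemma hsum_rsum (G : nat -> R) k1 : (1 <= k1)%nat -> sum_f 1 k1 G = rsum k1 (fun l => G (S l)).
Proof.
  intros Hk. unfold sum_f. rewrite sum_f_R0_rsum. replace (S (k1 - 1)) with k1 by lia.
  apply rsum_ext. intros l _. f_equal. lia.
Qed.

Lemma err_small d k1 k2 Lf eps eta : (2 <= d)%nat -> (1 <= k1)%nat -> (1 <= k2)%nat -> 0 <= Lf -> 0 < eps ->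
  eta = Rmin (1/4) (eps / (4 * INR k1 * (droot d Lf + 1))) ->
  2 ^ d * Kc d * Lf * INR k1 ^ (d - 1) / eps ^ d <= INR k2 ->
  INR k1 * (2 * eta * droot d Lf + droot d (Lf * Kc d * dx k1 * dy k1 k2)) <= eps.
Proof.
  intros Hd Hk1 Hk2 HL He Heta HC.
  assert (Hk : 1 <= INR k1) by (apply (le_INR 1); auto).
  assert (Hk2' : 1 <= INR k2) by (apply (le_INR 1); auto).
  set (r := droot d Lf). assert (Hr : 0 <= r) by apply droot_nonneg.
  assert (H1 : INR k1 * (2 * eta * r) <= eps / 2).
  { assert (eta <= eps / (4 * INR k1 * (r + 1))) by (rewrite Heta; apply Rmin_r).
    assert (Hp : 0 < 4 * INR k1 * (r + 1)) by nra.
    assert (eta * (4 * INR k1 * (r + 1)) <= eps).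
    { apply Rle_trans with (eps / (4 * INR k1 * (r + 1)) * (4 * INR k1 * (r + 1))). apply Rmult_le_compat_r; lra. right; field; lra. }
    assert (0 <= eta). { rewrite Heta. apply Rmin_glb. lra. apply Rlt_le, Rdiv_lt_0_compat. lra. fold r. nra. }
    nra. }
  assert (H2 : droot d (Lf * Kc d * dx k1 * dy k1 k2) <= eps / (2 * INR k1)).
  { apply droot_le_pow; [lia| apply Rmult_le_pos; [lra|left; apply Rinv_0_lt_compat; lra]|].
    assert (HK : 0 < Kc d) by (unfold Kc; apply Rmult_lt_0_compat; [apply Rmult_lt_0_compat; [lra|apply lt_0_INR; lia]|apply pow_lt; lra]).
    assert (HE : 0 < eps ^ d) by (apply pow_lt; lra).
    set (p := INR k1 ^ (d - 1)). assert (Hp : 1 <= p) by (unfold p; rewrite <- (pow1 (d-1)); apply pow_incr; lra).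
    assert (Ekd : INR k1 ^ d = INR k1 * p) by (unfold p; replace d with (S (d - 1)) at 1 by lia; reflexivity).
    assert (E2 : 0 < 2 ^ d) by (apply pow_lt; lra).
    assert (Hpow : (eps / (2 * INR k1)) ^ d = eps ^ d / (2 ^ d * (INR k1 * p))).
    { unfold Rdiv. rewrite Rpow_mult_distr, pow_inv, Rpow_mult_distr, Ekd. reflexivity. }
    rewrite Hpow. unfold dy, dx.
    assert (HC' : 2 ^ d * Kc d * Lf * p <= INR k2 * eps ^ d).
    { fold p in HC. apply Rle_trans with (2 ^ d * Kc d * Lf * p / eps ^ d * eps ^ d). right; field; lra.
      apply Rmult_le_compat_r; lra. }
    apply (Rmult_le_reg_r (2 ^ d * (INR k1 * p) * (INR k1 * INR k1 * INR k2))).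
    { apply Rmult_lt_0_compat; [apply Rmult_lt_0_compat; nra|]. nra. }
    replace (eps ^ d / (2 ^ d * (INR k1 * p)) * (2 ^ d * (INR k1 * p) * (INR k1 * INR k1 * INR k2))) with (eps ^ d * (INR k1 * INR k1 * INR k2)) by (field; split; nra).
    replace (Lf * Kc d * / INR k1 * (/ INR k1 / INR k2) * (2 ^ d * (INR k1 * p) * (INR k1 * INR k1 * INR k2))) with (INR k1 * (2 ^ d * Kc d * Lf * p)) by (field; split; nra).
    assert (INR k1 * (2 ^ d * Kc d * Lf * p) <= INR k1 * (INR k2 * eps ^ d)) by (apply Rmult_le_compat_l; lra).
    assert (0 <= (INR k1 - 1) * (INR k1 * INR k2 * eps ^ d)) by (apply Rmult_le_pos; [lra| apply Rmult_le_pos; [apply Rmult_le_pos|]; lra]). nra. }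
  assert (INR k1 * droot d (Lf * Kc d * dx k1 * dy k1 k2) <= eps / 2).
  { apply (Rmult_le_compat_l (INR k1)) in H2; [|lra]. replace (INR k1 * (eps / (2 * INR k1))) with (eps / 2) in H2 by (field; lra). lra. }
  fold r. nra.
Qed.

Theorem lemma3p3 :
  forall d : nat, (2 <= d)%nat ->
  exists C : R, 0 < C /\
  forall (L : nat) (f : vec -> R),
    (1 <= L)%nat ->
    (forall x, 0 <= f x) ->
    (forall x, ~ in_cube d x -> f x = 0) ->
    piecewise_const d L f ->
    forall (eps : R) (k1 k2 : nat),
      0 < eps ->
      (L <= k1)%nat -> (1 <= k2)%nat ->
      C * Linf_norm d f * INR k1 ^ (d - 1) / eps ^ d <= INR k2 ->
      forall b, in_Phi d k1 k2 b ->
      Rbar_le (Hsum d L k1 k2 f b) (Rbar_plus (Jbar d f) eps).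
Proof.
  intros d Hd. exists (2 ^ d * Kc d). split.
  { unfold Kc. apply Rmult_lt_0_compat. apply pow_lt; lra.
    apply Rmult_lt_0_compat; [apply Rmult_lt_0_compat; [lra|apply lt_0_INR; lia]|apply pow_lt; lra]. }
  intros L f HL Hpos Hout Hpc eps k1 k2 Heps HLk Hk2 HC b Hb.
  assert (Hk1 : (1 <= k1)%nat) by lia.
  set (Lf := Linf_norm d f).
  assert (HL0 : 0 <= Lf).
  { destruct (center_cell d L (fun _ => O) HL) as [_ [_ Ho]]. intros; lia.
    eapply Rle_trans; [apply (Hpos (center L (fun _ => O)))|]. apply f_le_Linf with L; auto. }
  set (eta := Rmin (1/4) (eps / (4 * INR k1 * (droot d Lf + 1)))).
  assert (He : 0 < eta < 1/2).
  { assert (0 < INR k1) by (apply lt_0_INR; lia). pose proof (droot_nonneg d Lf).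
    split. apply Rmin_glb_lt; [lra|]. apply Rdiv_lt_0_compat; [lra|nra].
    pose proof (Rmin_l (1/4) (eps / (4 * INR k1 * (droot d Lf + 1)))) as Hm. fold eta in Hm. lra. }
  set (D := Dv k1 k2 b).
  assert (HD : forall j i, 0 <= D j i) by (intros; apply Dv_nonneg).
  set (g := gam d eta k1 D). set (w := gder d eta k1 D).
  set (J := Jfun d f g w).
  assert (HJ : Rbar_le J (Jbar d f)).
  { unfold Jbar. destruct (Lub_Rbar_correct (fun v => exists gamma g, admissible d gamma g /\ v = Jfun d f gamma g)) as [Hub _].
    apply Hub. exists g, w. split; auto. apply gam_admissible; auto. }
  assert (Hmain : Hsum d L k1 k2 f b <= J + eps).
  { unfold Hsum. rewrite hsum_rsum by auto.
    set (err := 2 * eta * droot d Lf + droot d (Lf * Kc d * dx k1 * dy k1 k2)).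
    eapply Rle_trans.
    { apply rsum_le with (G := fun l => RInt (FJ d f g w) (INR l * dx k1) (INR (S l) * dx k1) + err).
      intros l Hl. apply slab_bound; auto. }
    rewrite rsum_plus, rsum_const.
    replace J with (RInt (FJ d f g w) 0 1) by reflexivity.
    rewrite <- slab_sum; auto. 2:{ apply FJ_ex with L; auto. }
    assert (INR k1 * err <= eps) by (apply (err_small d k1 k2 Lf eps eta); auto). lra. }
  destruct (Jbar d f) as [jb| |]; simpl in *; auto.
  lra.
Qed.
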